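(* Let $z:[0,\infty)\to X_{0+}$ be a solution of the modified Becker–Döring equations obtained by the truncation construction described in the context. Then $J_l(z(t))\to0$ as $t\to\infty$ for every $l\ge0$.
   Context: Let $(q_l)_{l\ge1}$ be positive with $q_1=1$, $0<R:=\lim_l q_l/q_{l+1}<\infty$, and $\gamma_l>0$ with $\gamma_l/l\to0$. $X=\{z:\sum_l l|z_l|<\infty\}$, $X_{0+}$ its nonnegative elements, $\rho(z)=\sum_l lz_l$, $N(z)=\sum_lz_l$, $J_l(z)=\gamma_l\big(z_1z_l-N(z)\frac{q_l}{q_{l+1}}z_{l+1}\big)$ ($l\ge1$), $J_0(z)=-\sum_{l\ge1}J_l(z)$, $A(z)=\sum_lz_l\ln(z_l/(q_lN(z)))$ ($0\ln0=0$). Fix initial data $y\in X_{0+}$ with $y_1>0$ and $\rho_0:=\rho(y)>0$. For $m\ge2$ let $z^{(m)}$ be the solution of the truncated system $\dot z_l=J_{l-1}(z)-J_l(z)$ ($2\le l\le m-1$), $\dot z_m=J_{m-1}(z)$, $\dot z_1=-J_1(z)-\sum_{l=1}^{m-1}J_l(z)$, $z_l(0)=y_l$ ($l\le m$), with $z_l\equiv0$ for $l>m$. The solution $z$ is a continuous map $[0,\infty)\to X$ such that, for some subsequence $m_j\to\infty$, $z^{(m_j)}_l\to z_l$ uniformly on compact subsets of $[0,\infty)$ for every $l$. Such $z$ exists; it satisfies $z_l(t)\ge0$, $\rho(z(t))=\rho_0$ for all $t$, $\frac{d}{dt}z_l=J_{l-1}(z)-J_l(z)$ for $l\ge2$, $z_1(t_2)-z_1(t_1)=\int_{t_1}^{t_2}J_0(z(t))dt$,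 and $A(z(t_1))-A(z(t_2))\ge \frac{c}{\rho_0^2}\int_{t_1}^{t_2}\sum_{l\ge1}|J_l(z(t))|^2dt$ for $t_1\le t_2$, with $c>0$. *)

(* Defs.v *)
(* Sequences are functions nat -> R; index 0 is unused (indices l >= 1 only),
   so sums over l >= 1 are written Series (fun k => f (S k)). *)
From Stdlib Require Import Reals Lra Lia.
From Coquelicot Require Import Coquelicot.
Open Scope R_scope.

Definition inX (z : nat -> R) : Prop :=
  ex_series (fun k => INR (S k) * Rabs (z (S k))).

Definition normX (z : nat -> R) : R :=
  Series (fun k => INR (S k) * Rabs (z (S k))).

Definition rho (z : nat -> R) : R := Series (fun k => INR (S k) * z (S k)).

Definition Nz (z : nat -> R) : R := Series (fun k => z (S k)).

Definition Jp (q gamma : nat -> R) (l : nat) (z : nat -> R) : R :=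
  gamma l * (z 1%nat * z l - Nz z * (q l / q (S l)) * z (S l)).

Definition J (q gamma : nat -> R) (l : nat) (z : nat -> R) : R :=
  match l with
  | O => - Series (fun k => Jp q gamma (S k) z)
  | _ => Jp q gamma l z
  end.

Definition trunc_sol (q gamma y : nat -> R) (m : nat) (zm : R -> nat -> R) : Prop :=
  (forall t l, 0 <= t -> (m < l)%nat -> zm t l = 0) /\
  (forall l, (1 <= l <= m)%nat -> zm 0 l = y l) /\
  (forall l, (1 <= l <= m)%nat ->
     filterlim (fun s => zm s l) (at_right 0) (locally (y l))) /\
  (forall t, 0 < t ->
     is_derive (fun s => zm s 1%nat) t
       (- Jp q gamma 1 (zm t) - sum_f_R0 (fun k => Jp q gamma (S k) (zm t)) (m - 2))) /\
  (forall t l, 0 < t -> (2 <= l <= m - 1)%nat ->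
     is_derive (fun s => zm s l) t (Jp q gamma (l - 1) (zm t) - Jp q gamma l (zm t))) /\
  (forall t, 0 < t ->
     is_derive (fun s => zm s m) t (Jp q gamma (m - 1) (zm t))).

Definition cont_into_X (z : R -> nat -> R) : Prop :=
  (forall t, 0 <= t -> inX (z t)) /\
  (forall t, 0 <= t ->
     filterlim (fun s => normX (fun l => z s l - z t l))
       (within (fun s => 0 <= s) (locally t)) (locally 0)).

(* Main.v *)
Require Import Defs.
From Stdlib Require Import Reals Lra Lia Classical.
From Coquelicot Require Import Coquelicot.
Open Scope R_scope.


Fixpoint sm (f : nat -> R) (n : nat) : R :=
  match n with O => 0 | S n' => sm f n' + f (S n') end.

Lemma sm_ext f g n : (forall k, (1 <= k <= n)%nat -> f k = g k) -> sm f n = sm g n.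
Proof. induction n; simpl; intros H; auto. rewrite IHn; [|intros; apply H; lia]. rewrite (H (S n)) by lia; auto. Qed.

Lemma sm_plus f g n : sm (fun k => f k + g k) n = sm f n + sm g n.
Proof. induction n; simpl; [lra|rewrite IHn; lra]. Qed.

Lemma sm_minus f g n : sm (fun k => f k - g k) n = sm f n - sm g n.
Proof. induction n; simpl; [lra|rewrite IHn; lra]. Qed.

Lemma sm_scal c f n : sm (fun k => c * f k) n = c * sm f n.
Proof. induction n; simpl; [lra|rewrite IHn; lra]. Qed.

Lemma sm_zero n : sm (fun _ => 0) n = 0.
Proof. induction n; simpl; [lra|rewrite IHn; lra]. Qed.

Lemma sm_le f g n : (forall k, (1 <= k <= n)%nat -> f k <= g k) -> sm f n <= sm g n.
Proof. induction n; simpl; intros H; [lra|]. assert (sm f n <= sm g n) by (apply IHn; intros; apply H; lia).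
 assert (f (S n) <= g (S n)) by (apply H; lia). lra. Qed.

Lemma sm_nonneg f n : (forall k, (1 <= k <= n)%nat -> 0 <= f k) -> 0 <= sm f n.
Proof. intros H. rewrite <- (sm_zero n). apply sm_le. auto. Qed.

Lemma sm_abs f n : Rabs (sm f n) <= sm (fun k => Rabs (f k)) n.
Proof. induction n; simpl. rewrite Rabs_R0; lra.
 eapply Rle_trans; [apply Rabs_triang|lra]. Qed.

Lemma sm_mono f n p : (forall k, (1 <= k)%nat -> 0 <= f k) -> (n <= p)%nat -> sm f n <= sm f p.
Proof. intros H Hp. induction Hp as [|p Hp IH]; [lra|simpl]. assert (0 <= f (S p)) by (apply H; lia). lra. Qed.

Lemma sm_term f n k : (forall k, (1 <= k <= n)%nat -> 0 <= f k) -> (1 <= k <= n)%nat -> f k <= sm f n.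
Proof. induction n; intros H Hk; [lia|simpl]. destruct (Nat.eq_dec k (S n)).
 - subst. assert (0 <= sm f n) by (apply sm_nonneg; intros; apply H; lia). lra.
 - assert (f k <= sm f n) by (apply IHn; [intros; apply H; lia|lia]). assert (0 <= f (S n)) by (apply H; lia). lra. Qed.

Lemma sm_beyond f m n : (forall k, (m < k)%nat -> f k = 0) -> (m <= n)%nat -> sm f n = sm f m.
Proof. intros H Hn. induction Hn as [|p Hp IH]; auto. simpl. rewrite IH, H by lia. lra. Qed.

Lemma sm_shift f n : sm f (S n) = f 1%nat + sm (fun k => f (S k)) n.
Proof. induction n; simpl in *; [lra|]. rewrite IHn. lra. Qed.

Lemma sum_f_R0_sm f n : sum_f_R0 (fun k => f (S k)) n = sm f (S n).
Proof. induction n; simpl in *; [lra|]. rewrite IHn. simpl. lra. Qed.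

Lemma sum_n_sm f n : sum_n (fun k => f (S k)) n = sm f (S n).
Proof. rewrite sum_n_Reals. apply sum_f_R0_sm. Qed.

Lemma is_series_sm f : forall L : R, is_lim_seq (fun n => sm f n) L -> is_series (fun k => f (S k)) L.
Proof. intros L H. apply (is_lim_seq_incr_1 (fun n => sm f n)) in H.
 unfold is_series. eapply filterlim_ext; [|apply H]. intros n. simpl. rewrite sum_n_sm. simpl. auto. Qed.

Lemma Series_sm_limit f : ex_series (fun k => f (S k)) -> is_lim_seq (fun n => sm f n) (Series (fun k => f (S k))).
Proof. intros H. apply Series_correct in H. apply (is_lim_seq_incr_1 (fun n => sm f n)).
 unfold is_series in H. eapply filterlim_ext; [|apply H]. intros n. simpl. rewrite sum_n_sm. simpl. auto. Qed.

Lemma Series_trunc f m : (forall k, (m < k)%nat -> f k = 0) -> Series (fun k => f (S k)) = sm f m.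
Proof. intros H. apply is_series_unique. apply is_series_sm.
 apply is_lim_seq_ext_loc with (fun _ => sm f m); [|apply is_lim_seq_const].
 exists m. intros n Hn. symmetry. apply sm_beyond; auto. Qed.

Lemma sm_derive (F : R -> nat -> R) (dF : nat -> R) t n :
  (forall k, (1 <= k <= n)%nat -> is_derive (fun s => F s k) t (dF k)) ->
  is_derive (fun s => sm (F s) n) t (sm dF n).
Proof. induction n; intros H; simpl.
 - exact (@is_derive_const R_AbsRing R_NormedModule 0 t).
 - apply (is_derive_plus (fun s => sm (F s) n) (fun s => F s (S n))).
   apply IHn; intros; apply H; lia. apply H; lia. Qed.

Lemma sm_lim (F : nat -> nat -> R) (l : nat -> R) n :
  (forall k, (1 <= k <= n)%nat -> is_lim_seq (fun j => F j k) (l k)) ->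
  is_lim_seq (fun j => sm (F j) n) (sm l n).
Proof. induction n; intros H; simpl.
 - apply is_lim_seq_const.
 - apply (is_lim_seq_plus' (fun j => sm (F j) n) (fun j => F j (S n))).
   apply IHn; intros; apply H; lia. apply H; lia. Qed.

Lemma telesc (J u : nat -> R) n :
  sm (fun k => (J (k-1)%nat - J k) * u k) (S n) =
  J 0%nat * u 1%nat - J (S n) * u (S n) + sm (fun l => J l * (u (S l) - u l)) n.
Proof. induction n.
 - simpl. replace (1-1)%nat with 0%nat by lia. lra.
 - change (sm (fun k => (J (k-1)%nat - J k) * u k) (S (S n))) with
     (sm (fun k => (J (k-1)%nat - J k) * u k) (S n) + (J (S (S n) - 1)%nat - J (S (S n))) * u (S (S n))).
   rewrite IHn. simpl. replace (n - 0)%nat with n by lia. lra. Qed.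

Definition dflux (J : nat -> R) (m k : nat) : R :=
  if Nat.eqb k 1 then - J 1%nat - sm J (m-1) else if Nat.eqb k m then J (m-1)%nat else J (k-1)%nat - J k.

Lemma flux_identity (J u : nat -> R) m : (2 <= m)%nat ->
  sm (fun k => dflux J m k * u k) m = sm (fun l => J l * (u (S l) - u l - u 1%nat)) (m-1).
Proof. intros Hm.
 set (J' := fun k => if Nat.eqb k 0 then - sm J (m-1) else if Nat.ltb k m then J k else 0).
 rewrite (sm_ext _ (fun k => (J' (k-1)%nat - J' k) * u k)).
 2:{ intros k Hk. unfold dflux, J'. destruct (Nat.eqb_spec k 1).
     - subst. simpl. replace (Nat.ltb 1 m) with true by (symmetry; apply Nat.ltb_lt; lia). lra.
     - destruct (Nat.eqb_spec (k-1) 0); [lia|]. replace (Nat.ltb (k-1) m) with true by (symmetry; apply Nat.ltb_lt; lia).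
       destruct (Nat.eqb_spec k 0); [lia|]. destruct (Nat.eqb_spec k m).
       + subst. rewrite Nat.ltb_irrefl. lra.
       + replace (Nat.ltb k m) with true by (symmetry; apply Nat.ltb_lt; lia). lra. }
 replace m with (S (m-1)) at 1 by lia. rewrite telesc.
 unfold J' at 1 2. simpl. replace (Nat.ltb (S (m-1)) m) with false by (symmetry; apply Nat.ltb_ge; lia).
 rewrite (sm_ext (fun l => J' l * (u (S l) - u l)) (fun l => J l * (u (S l) - u l))).
 2:{ intros k Hk. unfold J'. destruct (Nat.eqb_spec k 0); [lia|]. replace (Nat.ltb k m) with true by (symmetry; apply Nat.ltb_lt; lia). auto. }
 rewrite (sm_ext (fun l => J l * (u (S l) - u l - u 1%nat)) (fun l => J l * (u (S l) - u l) - u 1%nat * J l)) by (intros; ring).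
 rewrite sm_minus, sm_scal. ring. Qed.


Lemma ln_le_xm1 x : 0 < x -> ln x <= x - 1.
Proof. intros Hx. pose proof (exp_ineq1_le (ln x)). rewrite exp_ln in H; lra. Qed.

Lemma xlnx_lb x (k : nat) : 0 < x -> - INR k * x - exp (- (INR k + 1)) <= x * ln x.
Proof. intros Hx. set (e := exp (- (INR k + 1))). assert (He : 0 < e) by apply exp_pos.
 set (u := x / e). assert (Hu : 0 < u) by (unfold u; apply Rdiv_lt_0_compat; auto).
 assert (Hxu : x = e * u) by (unfold u; field; lra).
 assert (Hl : ln x = ln u - (INR k + 1)).
 { rewrite Hxu, ln_mult by auto. unfold e. rewrite ln_exp. ring. }
 pose proof (ln_le_xm1 (/ u) (Rinv_0_lt_compat _ Hu)). rewrite ln_Rinv in H by auto.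
 assert (u * ln u - u + 1 >= 0).
 { assert (u * (- ln u) <= u * (/u - 1)) by (apply Rmult_le_compat_l; lra).
   replace (u * (/u - 1)) with (1 - u) in H0 by (field; lra). lra. }
 rewrite Hl, Hxu. assert (e * (u * ln u - u + 1) >= 0).
 { apply Rle_ge. apply Rmult_le_pos; lra. } nra. Qed.

Definition negp x := - Rmin x 0.

Lemma negp_nonneg x : 0 <= negp x.
Proof. unfold negp, Rmin. destruct (Rle_dec x 0); lra. Qed.

Lemma negp_ge x : - x <= negp x.
Proof. unfold negp, Rmin. destruct (Rle_dec x 0); lra. Qed.

Lemma negp_of_neg x : x <= 0 -> negp x = - x.
Proof. unfold negp, Rmin. destruct (Rle_dec x 0); lra. Qed.

Lemma negp_of_pos x : 0 <= x -> negp x = 0.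
Proof. unfold negp, Rmin. destruct (Rle_dec x 0); lra. Qed.

Lemma prod_lb x y B : Rabs x <= B -> Rabs y <= B -> - B * (negp x + negp y) <= x * y.
Proof. intros Hx Hy. unfold negp, Rmin. apply Rabs_le_between in Hx. apply Rabs_le_between in Hy.
 destruct (Rle_dec x 0); destruct (Rle_dec y 0); nra. Qed.

Lemma diss_ineq a b : 0 < a -> 0 < b -> (a - b) ^ 2 / (a + b) <= (a - b) * (ln a - ln b).
Proof. intros Ha Hb. destruct (Rle_dec b a).
 - assert (ln (b / a) <= b / a - 1) by (apply ln_le_xm1; apply Rdiv_lt_0_compat; auto).
   rewrite ln_div in H by auto.
   assert (ln a - ln b >= (a - b) / a).
   { replace ((a-b)/a) with (- (b/a - 1)) by (field; lra). lra. }
   assert ((a - b) * (ln a - ln b) >= (a - b) * ((a - b) / a)) by (apply Rle_ge, Rmult_le_compat_l; lra).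
   assert ((a - b) ^ 2 / (a + b) <= (a - b) * ((a - b) / a)).
   { unfold Rdiv. rewrite <- Rmult_assoc. replace ((a-b)^2) with ((a-b)*(a-b)) by ring.
     apply Rmult_le_compat_l. nra. apply Rinv_le_contravar; lra. } lra.
 - assert (ln (a / b) <= a / b - 1) by (apply ln_le_xm1; apply Rdiv_lt_0_compat; auto).
   rewrite ln_div in H by auto.
   assert (ln b - ln a >= (b - a) / b).
   { replace ((b-a)/b) with (- (a/b - 1)) by (field; lra). lra. }
   assert ((b - a) * (ln b - ln a) >= (b - a) * ((b - a) / b)) by (apply Rle_ge, Rmult_le_compat_l; lra).
   assert ((a - b) ^ 2 / (a + b) <= (b - a) * ((b - a) / b)).
   { unfold Rdiv. rewrite <- Rmult_assoc. replace ((a-b)^2) with ((b-a)*(b-a)) by ring.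
     apply Rmult_le_compat_l. nra. apply Rinv_le_contravar; lra. }
   replace ((a - b) * (ln a - ln b)) with ((b - a) * (ln b - ln a)) by ring. lra. Qed.

Lemma exp_geom k : exp (- (INR k + 1)) <= (/2) ^ (S k).
Proof. induction k.
 - replace (- (INR 0 + 1)) with (Ropp 1) by (simpl; ring). rewrite exp_Ropp. replace ((/2)^1) with (/2) by ring.
   apply Rinv_le_contravar; [lra|]. pose proof (exp_ineq1_le 1). lra.
 - rewrite S_INR. replace (- (INR k + 1 + 1)) with (- (INR k + 1) + Ropp 1) by ring.
   rewrite exp_plus. rewrite (exp_Ropp 1). change ((/2) ^ S (S k)) with (/2 * (/2) ^ (S k)). rewrite Rmult_comm.
   apply Rmult_le_compat. apply Rlt_le, Rinv_0_lt_compat, exp_pos. apply Rlt_le, exp_pos.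
   apply Rinv_le_contravar; [lra|]. pose proof (exp_ineq1_le 1). lra. auto. Qed.

Lemma geom_sum n : sm (fun k => (/2) ^ k) n = 1 - (/2) ^ n.
Proof. induction n; simpl; [lra|]. rewrite IHn. field. Qed.

Lemma exp_sum_le n : sm (fun k => exp (- (INR k + 1))) n <= 1.
Proof. eapply Rle_trans. apply (sm_le _ (fun k => (/2)^k)).
 intros k _. eapply Rle_trans; [apply exp_geom|]. simpl.
 assert (0 <= (/2)^k) by (apply pow_le; lra). lra.
 rewrite geom_sum. assert (0 <= (/2)^n) by (apply pow_le; lra). lra. Qed.


Lemma derive_cont f x l : is_derive f x l -> continuity_pt f x.
Proof. intros H. apply continuity_pt_filterlim. apply (ex_derive_continuous (K:=R_AbsRing) (V:=R_NormedModule)). exists l; auto. Qed.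

Lemma mvt_le (f df : R -> R) a b : a <= b -> (forall x, a <= x <= b -> is_derive f x (df x)) ->
  exists c, a <= c <= b /\ f b - f a = df c * (b - a).
Proof. intros Hab H. destruct (MVT_gen f a b df) as [c [Hc Hf]].
 - intros x Hx. rewrite Rmin_left, Rmax_right in Hx by lra. apply H; lra.
 - intros x Hx. rewrite Rmin_left, Rmax_right in Hx by lra. eapply derive_cont, H; lra.
 - rewrite Rmin_left, Rmax_right in Hc by lra. exists c; split; auto. Qed.

Lemma mvt_decr (f df : R -> R) a b : a <= b -> (forall x, a <= x <= b -> is_derive f x (df x)) ->
  (forall x, a <= x <= b -> df x <= 0) -> f b <= f a.
Proof. intros Hab H Hd. destruct (mvt_le f df a b Hab H) as [c [Hc E]].
 assert (df c * (b - a) <= 0). { assert (df c <= 0) by (apply Hd; lra). nra. } lra. Qed.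

Lemma mvt_drop (f df : R -> R) a b c0 : a <= b -> (forall x, a <= x <= b -> is_derive f x (df x)) ->
  (forall x, a <= x <= b -> df x <= - c0) -> f b <= f a - c0 * (b - a).
Proof. intros Hab H Hd. destruct (mvt_le f df a b Hab H) as [c [Hc E]].
 assert (df c * (b - a) <= - c0 * (b - a)). { assert (df c <= - c0) by (apply Hd; lra). nra. } lra. Qed.

Lemma mvt_incr_strict (f df : R -> R) a b : a < b -> (forall x, a <= x <= b -> is_derive f x (df x)) ->
  (forall x, a <= x <= b -> 0 < df x) -> f a < f b.
Proof. intros Hab H Hd. destruct (mvt_le f df a b (Rlt_le _ _ Hab) H) as [c [Hc E]].
 assert (0 < df c * (b - a)). { assert (0 < df c) by (apply Hd; lra). nra. } lra. Qed.

Lemma mvt_const (f df : R -> R) a b : a <= b -> (forall x, a <= x <= b -> is_derive f x (df x)) ->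
  (forall x, a <= x <= b -> df x = 0) -> f b = f a.
Proof. intros Hab H Hd. destruct (mvt_le f df a b Hab H) as [c [Hc E]].
 rewrite Hd in E by lra. lra. Qed.

Lemma at_right_ex (P : R -> Prop) : at_right 0 P -> exists d, 0 < d /\ forall s, 0 < s < d -> P s.
Proof. intros [eps H]. exists eps. split. apply cond_pos. intros s Hs. apply H; [|lra].
 unfold ball; simpl; unfold AbsRing_ball, abs, minus, plus, opp; simpl. rewrite Rabs_right; lra. Qed.

Lemma at_right_lim f L : filterlim f (at_right 0) (locally L) ->
  forall eps, 0 < eps -> exists d, 0 < d /\ forall s, 0 < s < d -> Rabs (f s - L) < eps.
Proof. intros H eps He. apply at_right_ex.
 apply (H (fun v => Rabs (v - L) < eps)). exists (mkposreal eps He). intros v Hv. apply Hv. Qed.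

Lemma bounded_0T f L T : 0 < T -> filterlim f (at_right 0) (locally L) ->
  (forall s, 0 < s -> continuity_pt f s) -> exists B, forall s, 0 < s <= T -> Rabs (f s) <= B.
Proof. intros HT Hl Hc. destruct (at_right_lim f L Hl 1 Rlt_0_1) as [d [Hd Hd']].
 set (a := Rmin (d/2) T). assert (0 < a) by (unfold a; apply Rmin_pos; lra).
 assert (a <= T) by apply Rmin_r.
 destruct (continuity_ab_maj (fun s => Rabs (f s)) a T) as [M [HM _]]; auto.
 { intros c Hc'. apply (continuity_pt_comp f Rabs). apply Hc; lra. apply Rcontinuity_abs. }
 exists (Rmax (Rabs L + 1) (Rabs (f M))). intros s Hs. destruct (Rle_dec a s).
 - eapply Rle_trans; [apply HM; lra|apply Rmax_r].
 - assert (s < d) by (assert (a <= d/2) by apply Rmin_l; lra). specialize (Hd' s ltac:(lra)).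
   eapply Rle_trans; [|apply Rmax_l]. pose proof (Rabs_triang_inv (f s) L). lra. Qed.

Lemma negsq_derive x : is_derive (fun x => (Rmin x 0) ^ 2) x (2 * Rmin x 0).
Proof. destruct (Rtotal_order x 0) as [Hx|[Hx|Hx]].
 - apply (is_derive_ext_loc (fun x => x ^ 2)).
   + exists (mkposreal (-x) ltac:(lra)). intros y Hy. unfold ball in Hy; simpl in Hy; unfold AbsRing_ball, abs, minus, plus, opp in Hy; simpl in Hy.
     apply Rabs_lt_between in Hy. rewrite Rmin_left by lra. auto.
   + rewrite Rmin_left by lra. auto_derive; auto; ring.
 - subst. apply is_derive_Reals. intros eps He. exists (mkposreal eps He). intros h Hh Hh'. simpl in Hh'.
   rewrite Rplus_0_l. replace (Rmin 0 0) with 0 by (unfold Rmin; destruct Rle_dec; lra).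
   unfold Rmin. destruct (Rle_dec h 0).
   + replace ((h ^ 2 - 0 ^ 2) / h - 2 * 0) with h by (field; auto). auto.
   + replace ((0 ^ 2 - 0 ^ 2) / h - 2 * 0) with 0 by (field; auto). rewrite Rabs_R0; auto.
 - apply (is_derive_ext_loc (fun _ => 0)).
   + exists (mkposreal x ltac:(lra)). intros y Hy. unfold ball in Hy; simpl in Hy; unfold AbsRing_ball, abs, minus, plus, opp in Hy; simpl in Hy.
     apply Rabs_lt_between in Hy. rewrite Rmin_right by lra. simpl. ring.
   + rewrite Rmin_right by lra. replace (2*0) with 0 by ring. exact (@is_derive_const R_AbsRing R_NormedModule 0 x). Qed.


Lemma at_right_fin (P : nat -> R -> Prop) n :
  (forall k, (1 <= k <= n)%nat -> at_right 0 (P k)) ->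
  at_right 0 (fun s => forall k, (1 <= k <= n)%nat -> P k s).
Proof. induction n; intros H.
 - apply filter_forall. intros s k Hk; lia.
 - eapply filter_imp; [|apply filter_and; [apply IHn; intros; apply H; lia|apply (H (S n)); lia]].
   intros s [H1 H2] k Hk. destruct (Nat.eq_dec k (S n)); [subst; auto|apply H1; lia]. Qed.

Lemma fin_bound (P : nat -> R -> Prop) n :
  (forall k, (1 <= k <= n)%nat -> exists B, P k B) -> (forall k B B', P k B -> B <= B' -> P k B') ->
  exists B, 0 <= B /\ forall k, (1 <= k <= n)%nat -> P k B.
Proof. intros H Hm. induction n.
 - exists 0. split; [lra|]. intros; lia.
 - destruct IHn as [B [HB0 HB]]; [intros; apply H; lia|]. destruct (H (S n)) as [B' HB']; [lia|].
   exists (Rmax B B'). split. eapply Rle_trans; [apply HB0|apply Rmax_l].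
   intros k Hk. destruct (Nat.eq_dec k (S n)).
   + subst. eapply Hm; [apply HB'|apply Rmax_r].
   + eapply Hm; [apply HB; lia|apply Rmax_l]. Qed.

Lemma sm_opp f n : sm (fun k => - f k) n = - sm f n.
Proof. induction n; simpl; [lra|rewrite IHn; lra]. Qed.

Lemma sm_const c n : sm (fun _ => c) n = INR n * c.
Proof. induction n; simpl sm; [simpl; ring|]. rewrite IHn, S_INR. ring. Qed.

Lemma cauchy_schwarz f n : (sm f n) ^ 2 <= INR n * sm (fun k => f k ^ 2) n.
Proof. induction n. simpl; lra.
 change (sm f (S n)) with (sm f n + f (S n)). change (sm (fun k => f k ^ 2) (S n)) with (sm (fun k => f k ^ 2) n + f (S n) ^ 2).
 rewrite S_INR. set (a := sm f n) in *. set (Q := sm (fun k => f k ^ 2) n) in *. set (x := f (S n)).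
 destruct n. { unfold a, Q. simpl sm. simpl INR. nra. }
 assert (Hn : 0 < INR (S n)) by (apply lt_0_INR; lia).
 assert (H0 : 0 <= (a - INR (S n) * x) ^ 2) by apply pow2_ge_0.
 assert (H1 : INR (S n) * (Q + INR (S n) * x ^ 2 - 2 * a * x) = INR (S n) * Q - a^2 + (a - INR (S n) * x) ^ 2) by ring.
 assert (H2 : 0 <= INR (S n) * (Q + INR (S n) * x ^ 2 - 2 * a * x)) by lra.
 assert (H3 : 0 <= Q + INR (S n) * x ^ 2 - 2 * a * x).
 { apply (Rmult_le_reg_l (INR (S n))); auto. lra. }
 assert (H4 : (a + x) ^ 2 = a^2 + 2 * a * x + x^2) by ring.
 assert (H5 : (INR (S n) + 1) * (Q + x ^ 2) = INR (S n) * Q + (Q + INR (S n) * x ^ 2 - 2 * a * x) + 2 * a * x + x^2) by ring.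
 rewrite H4, H5. lra. Qed.

Lemma gain_lb x y B2 S : Rabs x <= B2 -> Rabs y <= B2 -> negp x <= S -> negp y <= S -> 0 <= B2 ->
  - (2 * B2 * S) <= x * y.
Proof. intros. pose proof (prod_lb x y B2 H H0). pose proof (negp_nonneg x). pose proof (negp_nonneg y). nra. Qed.

Lemma loss_lb x y B2 S : y <= 0 -> Rabs x <= B2 -> negp y <= S -> 0 <= B2 ->
  - (B2 * S) <= - (x * y).
Proof. intros. pose proof (negp_nonneg y).
 replace (- (x * y)) with (x * negp y) by (rewrite negp_of_neg; auto; ring).
 apply Rabs_le_between in H0. nra. Qed.

Lemma scale_lb c C X A : 0 < c -> c <= C -> - A <= X -> 0 <= A -> - (C * A) <= c * X.
Proof. intros. nra. Qed.

Lemma at_right_lim' f L : filterlim f (at_right 0) (locally L) ->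
  forall eps, 0 < eps -> at_right 0 (fun s => Rabs (f s - L) < eps).
Proof. intros H eps He. apply (H (fun v => Rabs (v - L) < eps)). exists (mkposreal eps He). intros v Hv. apply Hv. Qed.

Lemma is_derive_val (f : R -> R) (x l l' : R) : is_derive f x l -> l = l' -> is_derive f x l'.
Proof. intros H <-. auto. Qed.

Lemma small_sq x c : 0 <= c -> (forall e, 0 < e -> x <= c * e ^ 2) -> x <= 0.
Proof. intros Hc H. destruct (Rle_dec x 0); auto. exfalso.
 set (e := Rmin 1 (x / (2 * (c + 1)))).
 assert (He : 0 < e) by (unfold e; apply Rmin_pos; [lra|apply Rdiv_lt_0_compat; lra]).
 assert (He1 : e <= 1) by apply Rmin_l. assert (He2 : e <= x / (2 * (c + 1))) by apply Rmin_r.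
 specialize (H e He). assert (c * e ^ 2 <= c * e) by (apply Rmult_le_compat_l; auto; simpl; nra).
 assert (c * e <= c * (x / (2 * (c + 1)))) by (apply Rmult_le_compat_l; auto).
 assert (c * (x / (2 * (c + 1))) < x).
 { apply (Rmult_lt_reg_r (2 * (c + 1))). lra. unfold Rdiv. field_simplify; [|lra]. nra. }
 lra. Qed.

Lemma small_lin x c : 0 <= c -> (forall e, 0 < e -> Rabs x <= c * e) -> x = 0.
Proof. intros Hc H. destruct (Req_dec x 0); auto. exfalso.
 assert (Hx : 0 < Rabs x) by (apply Rabs_pos_lt; auto).
 specialize (H (Rabs x / (2 * (c + 1))) ltac:(apply Rdiv_lt_0_compat; lra)).
 assert (c * (Rabs x / (2 * (c + 1))) < Rabs x).
 { apply (Rmult_lt_reg_r (2 * (c + 1))). lra. unfold Rdiv. field_simplify; [|lra]. nra. } lra. Qed.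

Lemma mul_le a b A B : 0 <= a -> a <= A -> 0 <= b -> b <= B -> a * b <= A * B.
Proof. intros. apply Rmult_le_compat; auto. Qed.

Section Trunc.
Variables (q gamma y : nat -> R) (m : nat) (w : R -> nat -> R).
Variables (G Rm rh be : R).
Hypothesis Hm : (2 <= m)%nat.
Hypothesis Hw : trunc_sol q gamma y m w.
Hypothesis hq_pos : forall l, (1 <= l)%nat -> 0 < q l.
Hypothesis hq1 : q 1%nat = 1.
Hypothesis hgamma_pos : forall l, (1 <= l)%nat -> 0 < gamma l.
Hypothesis hy_nonneg : forall l, (1 <= l)%nat -> 0 <= y l.
Hypothesis hy1 : 0 < y 1%nat.
Hypothesis hG : forall k, (1 <= k)%nat -> gamma k <= G * INR k.
Hypothesis hRm : forall k, (1 <= k)%nat -> q k / q (S k) <= Rm.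
Hypothesis hmass0 : sm (fun k => INR k * y k) m <= rh.
Hypothesis hlq : forall k, (1 <= k)%nat -> Rabs (ln (q k)) <= be * INR k.

Definition JJ t l := Jp q gamma l (w t).
Definition dd t k := dflux (JJ t) m k.
Definition NN t := sm (w t) m.

Lemma w_zero t k : 0 <= t -> (m < k)%nat -> w t k = 0.
Proof. intros. apply (proj1 Hw); auto. Qed.

Lemma Nz_eq t : 0 <= t -> Nz (w t) = NN t.
Proof. intros Ht. unfold Nz, NN. apply Series_trunc. intros; apply w_zero; auto. Qed.

Lemma JJ_eq t l : 0 <= t -> JJ t l = gamma l * (w t 1%nat * w t l - NN t * (q l / q (S l)) * w t (S l)).
Proof. intros Ht. unfold JJ, Jp. rewrite Nz_eq; auto. Qed.

Lemma G_nonneg : 0 <= G.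
Proof. pose proof (hG 1%nat (le_n _)). pose proof (hgamma_pos 1%nat (le_n _)). simpl in H. lra. Qed.

Lemma r_pos k : (1 <= k)%nat -> 0 < q k / q (S k).
Proof. intros. apply Rdiv_lt_0_compat; apply hq_pos; lia. Qed.

Lemma deriv_w t k : 0 < t -> (1 <= k <= m)%nat -> is_derive (fun s => w s k) t (dd t k).
Proof. intros Ht Hk. destruct Hw as [_ [_ [_ [H4 [H5 H6]]]]]. unfold dd, dflux.
 destruct (Nat.eqb_spec k 1).
 - subst. specialize (H4 t Ht). rewrite (sum_f_R0_sm (fun l => Jp q gamma l (w t))) in H4. replace (S (m-2)) with (m-1)%nat in H4 by lia. exact H4.
 - destruct (Nat.eqb_spec k m).
   + subst. apply H6; auto.
   + apply H5; auto. lia. Qed.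

Lemma cont_w t k : 0 < t -> (1 <= k <= m)%nat -> continuity_pt (fun s => w s k) t.
Proof. intros. eapply derive_cont. apply deriv_w; auto. Qed.

Lemma bound_T T : 0 < T -> exists B, 0 <= B /\ forall k, (1 <= k <= m)%nat -> forall s, 0 < s <= T -> Rabs (w s k) <= B.
Proof. intros HT. apply (fin_bound (fun k B => forall s, 0 < s <= T -> Rabs (w s k) <= B)).
 - intros k Hk. apply (bounded_0T (fun s => w s k) (y k)); auto.
   apply (proj1 (proj2 (proj2 Hw))); auto. intros; apply cont_w; auto.
 - intros k B B' H HB s Hs. specialize (H s Hs). lra. Qed.

Definition Sneg s := sm (fun j => negp (w s j)) m.

Lemma Sneg_nonneg s : 0 <= Sneg s.
Proof. apply sm_nonneg. intros; apply negp_nonneg. Qed.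

Lemma negp_le_Sneg s k : 0 <= s -> (1 <= k)%nat -> negp (w s k) <= Sneg s.
Proof. intros Hs Hk. destruct (Compare_dec.le_lt_dec k m).
 - apply (sm_term (fun j => negp (w s j))). intros; apply negp_nonneg. lia.
 - rewrite w_zero by auto. rewrite negp_of_pos by lra. apply Sneg_nonneg. Qed.

Lemma negpN_le s : negp (NN s) <= Sneg s.
Proof. destruct (Rle_dec (NN s) 0).
 - rewrite negp_of_neg by auto. unfold NN, Sneg. rewrite <- sm_opp.
   apply sm_le. intros. pose proof (negp_ge (w s k)). lra.
 - rewrite negp_of_pos by lra. apply Sneg_nonneg. Qed.

Lemma Rm_pos : 0 < Rm.
Proof. pose proof (hRm 1%nat (le_n _)). pose proof (r_pos 1%nat (le_n _)). lra. Qed.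

Lemma dd_lb s B : 0 < s -> 0 <= B -> (forall k, (1 <= k <= m)%nat -> Rabs (w s k) <= B) ->
  forall k, (1 <= k <= m)%nat -> w s k <= 0 ->
  - (INR m * (G * INR m * (3 * ((INR m + 1) * B) + 3 * Rm * ((INR m + 1) * B))) * Sneg s) <= dd s k.
Proof. intros Hs HB Hb k Hk Hwk.
 set (B2 := (INR m + 1) * B). set (Sg := Sneg s). set (N := NN s).
 set (c1 := G * INR m * (3 * B2 + 3 * Rm * B2)).
 assert (HmR : 2 <= INR m) by (replace 2 with (INR 2) by (simpl; ring); apply le_INR; auto).
 assert (HB2 : 0 <= B2) by (unfold B2; nra).
 assert (HBB2 : B <= B2) by (unfold B2; nra).
 assert (Hf1 : forall j, (1 <= j)%nat -> Rabs (w s j) <= B2).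
 { intros j Hj. destruct (Compare_dec.le_lt_dec j m). specialize (Hb j ltac:(lia)). lra. rewrite w_zero by (auto; lra). rewrite Rabs_R0. auto. }
 assert (Hf2 : Rabs N <= B2).
 { unfold N, NN. eapply Rle_trans; [apply sm_abs|]. eapply Rle_trans. apply (sm_le _ (fun _ => B)). auto.
   rewrite sm_const. unfold B2. nra. }
 assert (Hf3 : forall j, (1 <= j)%nat -> negp (w s j) <= Sg) by (intros; apply negp_le_Sneg; auto; lra).
 assert (Hf3' : negp N <= Sg) by apply negpN_le.
 assert (HS : 0 <= Sg) by apply Sneg_nonneg.
 assert (Hf4 : forall j, (1 <= j <= m)%nat -> gamma j <= G * INR m).
 { intros j Hj. eapply Rle_trans; [apply hG; lia|]. apply Rmult_le_compat_l. apply G_nonneg. apply le_INR; lia. }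
 assert (HRm := Rm_pos). assert (HG := G_nonneg).
 assert (HBS : 0 <= B2 * Sg) by (apply Rmult_le_pos; auto).
 assert (HGm : 0 <= G * INR m) by (apply Rmult_le_pos; lra).
 assert (HRBS : 0 <= Rm * (B2 * Sg)) by (apply Rmult_le_pos; lra).
 assert (Hc1 : 0 <= c1) by (unfold c1; apply Rmult_le_pos; [apply Rmult_le_pos; lra|nra]).
 assert (HJ : forall l, (1 <= l <= m - 1)%nat -> JJ s l = gamma l * (w s 1%nat * w s l + (q l / q (S l)) * (- (N * w s (S l))))).
 { intros l Hl. rewrite JJ_eq by lra. fold N. ring. }
 assert (Hi : forall l, (1 <= l <= m - 1)%nat -> w s 1%nat <= 0 -> - (c1 * Sg) <= - JJ s l).
 { intros l Hl Hw1. rewrite HJ by auto.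
   replace (- (gamma l * (w s 1%nat * w s l + q l / q (S l) * - (N * w s (S l)))))
     with (gamma l * (- (w s l * w s 1%nat) + q l / q (S l) * (N * w s (S l)))) by ring.
   assert (- (B2 * Sg) <= - (w s l * w s 1%nat)) by (apply loss_lb; auto; apply Hf1; lia).
   assert (- (2 * B2 * Sg) <= N * w s (S l)) by (apply gain_lb; auto; apply Hf1 || apply Hf3; lia).
   assert (- (Rm * (2 * B2 * Sg)) <= q l / q (S l) * (N * w s (S l))).
   { apply scale_lb; [apply r_pos; lia|apply hRm; lia|lra|lra]. }
   assert (- (G * INR m * (B2 * Sg + Rm * (2 * B2 * Sg))) <= gamma l * (- (w s l * w s 1%nat) + q l / q (S l) * (N * w s (S l)))).
   { apply scale_lb. apply hgamma_pos; lia. apply Hf4; lia. lra. nra. }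
   assert (G * INR m * (B2 * Sg + Rm * (2 * B2 * Sg)) <= c1 * Sg).
   { unfold c1. nra. } lra. }
 assert (Hii : forall k, (2 <= k <= m)%nat -> w s k <= 0 -> - (c1 * Sg) <= JJ s (k - 1)%nat).
 { intros k0 Hk0 Hw0. rewrite HJ by lia. replace (S (k0 - 1)) with k0 by lia.
   assert (- (2 * B2 * Sg) <= w s 1%nat * w s (k0 - 1)%nat) by (apply gain_lb; auto; apply Hf1 || apply Hf3; lia).
   assert (- (B2 * Sg) <= - (N * w s k0)) by (apply loss_lb; auto; apply Hf3; lia).
   assert (- (Rm * (B2 * Sg)) <= q (k0-1)%nat / q (S (k0-1)) * - (N * w s k0)).
   { apply scale_lb; [apply r_pos; lia|apply hRm; lia|lra|lra]. }
   replace (S (k0 - 1)) with k0 in H1 by lia.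
   assert (- (G * INR m * (2 * B2 * Sg + Rm * (B2 * Sg))) <= gamma (k0 - 1)%nat * (w s 1%nat * w s (k0 - 1)%nat + q (k0 - 1)%nat / q k0 * - (N * w s k0))).
   { apply scale_lb. apply hgamma_pos; lia. apply Hf4; lia. lra. nra. }
   assert (G * INR m * (2 * B2 * Sg + Rm * (B2 * Sg)) <= c1 * Sg).
   { unfold c1. nra. } lra. }
 assert (Hiii : forall k, (1 <= k <= m - 1)%nat -> w s k <= 0 -> - (c1 * Sg) <= - JJ s k).
 { intros k0 Hk0 Hw0. rewrite HJ by lia.
   replace (- (gamma k0 * (w s 1%nat * w s k0 + q k0 / q (S k0) * - (N * w s (S k0)))))
     with (gamma k0 * (- (w s 1%nat * w s k0) + q k0 / q (S k0) * (N * w s (S k0)))) by ring.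
   assert (- (B2 * Sg) <= - (w s 1%nat * w s k0)) by (apply loss_lb; auto; apply Hf1 || apply Hf3; lia).
   assert (- (2 * B2 * Sg) <= N * w s (S k0)) by (apply gain_lb; auto; apply Hf1 || apply Hf3; lia).
   assert (- (Rm * (2 * B2 * Sg)) <= q k0 / q (S k0) * (N * w s (S k0))).
   { apply scale_lb; [apply r_pos; lia|apply hRm; lia|lra|lra]. }
   assert (- (G * INR m * (B2 * Sg + Rm * (2 * B2 * Sg))) <= gamma k0 * (- (w s 1%nat * w s k0) + q k0 / q (S k0) * (N * w s (S k0)))).
   { apply scale_lb. apply hgamma_pos; lia. apply Hf4; lia. lra. nra. }
   assert (G * INR m * (B2 * Sg + Rm * (2 * B2 * Sg)) <= c1 * Sg).
   { unfold c1. nra. } lra. }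
 fold c1. assert (Hc1S : 0 <= c1 * Sg) by (apply Rmult_le_pos; auto).
 assert (Hm2 : INR m * c1 * Sg = (INR m - 2) * (c1 * Sg) + 2 * (c1 * Sg)) by ring.
 assert (Hm3 : 0 <= (INR m - 2) * (c1 * Sg)) by (apply Rmult_le_pos; lra).
 unfold dd, dflux. destruct (Nat.eqb_spec k 1).
 - subst k. assert (- (c1 * Sg) <= - JJ s 1%nat) by (apply Hi; auto; lia).
   assert (- (INR (m - 1) * (c1 * Sg)) <= - sm (JJ s) (m - 1)).
   { rewrite <- sm_opp. replace (- (INR (m - 1) * (c1 * Sg))) with (INR (m - 1) * (- (c1 * Sg))) by ring.
     rewrite <- sm_const. apply sm_le. intros l Hl.
     specialize (Hi l Hl Hwk). lra. }
   rewrite minus_INR in H0 by lia. simpl INR in H0.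
   replace (- (INR m * c1 * Sg)) with (- (c1 * Sg) + - ((INR m - 1) * (c1 * Sg))) by ring. lra.
 - destruct (Nat.eqb_spec k m).
   + subst k. assert (- (c1 * Sg) <= JJ s (m - 1)%nat) by (apply Hii; auto; lia). lra.
   + assert (- (c1 * Sg) <= JJ s (k - 1)%nat) by (apply Hii; auto; lia).
     assert (- (c1 * Sg) <= - JJ s k) by (apply Hiii; auto; lia). lra. Qed.

Lemma deriv_negsq s k : 0 < s -> (1 <= k <= m)%nat ->
  is_derive (fun s => Rmin (w s k) 0 ^ 2) s (dd s k * (2 * Rmin (w s k) 0)).
Proof. intros Hs Hk. apply (is_derive_comp (fun x => Rmin x 0 ^ 2) (fun s => w s k)).
 apply negsq_derive. apply deriv_w; auto. Qed.

Lemma nonneg_pos t : 0 < t -> forall k, (1 <= k <= m)%nat -> 0 <= w t k.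
Proof. intros Ht. destruct (bound_T t Ht) as [B [HB Hb]].
 set (K := INR m * (G * INR m * (3 * ((INR m + 1) * B) + 3 * Rm * ((INR m + 1) * B)))).
 assert (HmR : 2 <= INR m) by (replace 2 with (INR 2) by (simpl; ring); apply le_INR; auto).
 assert (HK : 0 <= K).
 { unfold K. pose proof G_nonneg. pose proof Rm_pos. assert (0 <= (INR m + 1) * B) by (apply Rmult_le_pos; lra).
   apply Rmult_le_pos; [lra|]. apply Rmult_le_pos; [apply Rmult_le_pos; lra|].
   assert (0 <= Rm * ((INR m + 1) * B)) by (apply Rmult_le_pos; lra). lra. }
 set (C := 2 * K * INR m). assert (HC : 0 <= C) by (unfold C; apply Rmult_le_pos; lra).
 set (v := fun s => sm (fun k => Rmin (w s k) 0 ^ 2) m).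
 set (vd := fun s => sm (fun k => dd s k * (2 * Rmin (w s k) 0)) m).
 assert (Hv0 : forall s, 0 <= v s) by (intros; apply sm_nonneg; intros; apply pow2_ge_0).
 assert (Hv : forall s, 0 < s -> is_derive v s (vd s)).
 { intros s Hs. apply (sm_derive (fun s k => Rmin (w s k) 0 ^ 2)). intros; apply deriv_negsq; auto. }
 assert (Hvd : forall s, 0 < s <= t -> vd s <= C * v s).
 { intros s Hs. assert (Hb' : forall k, (1 <= k <= m)%nat -> Rabs (w s k) <= B) by (intros; apply Hb; auto).
   pose proof (dd_lb s B ltac:(lra) HB Hb') as Hdd. fold K in Hdd.
   unfold vd. eapply Rle_trans. apply (sm_le _ (fun k => 2 * K * Sneg s * negp (w s k))).
   { intros k Hk. destruct (Rle_dec (w s k) 0).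
     - specialize (Hdd k Hk r). rewrite Rmin_left by auto. rewrite negp_of_neg by auto.
       assert (0 <= (dd s k + K * Sneg s) * (- w s k)) by (apply Rmult_le_pos; lra). nra.
     - rewrite Rmin_right by lra. pose proof (Sneg_nonneg s). pose proof (negp_nonneg (w s k)).
       replace (dd s k * (2 * 0)) with 0 by ring. apply Rmult_le_pos; nra. }
   rewrite sm_scal. fold (Sneg s).
   pose proof (cauchy_schwarz (fun j => negp (w s j)) m). fold (Sneg s) in H.
   rewrite (sm_ext (fun k => negp (w s k) ^ 2) (fun k => Rmin (w s k) 0 ^ 2)) in H by (intros; unfold negp; ring).
   fold (v s) in H. unfold C. nra. }
 set (h := fun s => exp (- C * s) * v s).
 assert (Hh : forall s, 0 < s -> is_derive h s (exp (- C * s) * (vd s - C * v s))).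
 { intros s Hs. assert (is_derive (fun s => exp (- C * s)) s (- C * exp (- C * s))) by (auto_derive; auto; ring).
   unfold h. eapply is_derive_val; [apply (Derive.is_derive_mult (fun s => exp (- C * s)) v); [exact H|apply Hv; auto]|]. ring. }
 assert (Hht : forall s, 0 < s < t -> h t <= v s).
 { intros s Hs. apply Rle_trans with (h s).
   - apply (mvt_decr h (fun s => exp (- C * s) * (vd s - C * v s))); [lra| |].
     intros; apply Hh; lra. intros x Hx. pose proof (Hvd x ltac:(lra)). pose proof (exp_pos (- C * x)). nra.
   - unfold h. assert (exp (- C * s) <= 1). { rewrite <- exp_0. destruct (Req_dec C 0). replace (- C * s) with 0 by (rewrite H; ring). lra.
       left. apply exp_increasing. nra. }
     pose proof (Hv0 s). pose proof (exp_pos (- C * s)). nra. }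
 assert (Hh0 : h t <= 0).
 { apply (small_sq (h t) (INR m)). lra.
   intros e He. cut (exists s, 0 < s < t /\ v s <= INR m * e ^ 2).
   { intros [s [Hs Hvs]]. pose proof (Hht s Hs). lra. }
     assert (at_right 0 (fun s => forall k, (1 <= k <= m)%nat -> Rabs (w s k - y k) < e)).
     { apply at_right_fin. intros k Hk. apply at_right_lim'; auto. apply (proj1 (proj2 (proj2 Hw))); auto. }
     destruct (at_right_ex _ H) as [d [Hd Hd']]. exists (Rmin (d/2) (t/2)).
     assert (0 < Rmin (d/2) (t/2)) by (apply Rmin_pos; lra). assert (Rmin (d/2) (t/2) <= d/2) by apply Rmin_l.
     assert (Rmin (d/2) (t/2) <= t/2) by apply Rmin_r. split; [lra|].
     specialize (Hd' (Rmin (d/2) (t/2)) ltac:(lra)). unfold v. rewrite <- sm_const.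
     apply sm_le. intros k Hk. specialize (Hd' k Hk). pose proof (hy_nonneg k ltac:(lia)).
     apply Rabs_lt_between in Hd'. unfold Rmin at 1. destruct (Rle_dec (w (Rmin (d/2) (t/2)) k) 0).
     + apply pow_maj_Rabs. rewrite Rabs_left1 by auto. lra.
     + simpl. nra. }
 assert (Hvt : v t <= 0).
 { unfold h in Hh0. pose proof (exp_pos (- C * t)). pose proof (Hv0 t).
   destruct (Rle_dec (v t) 0); auto. assert (0 < exp (- C * t) * v t) by (apply Rmult_lt_0_compat; lra). lra. }
 intros k Hk. assert (Rmin (w t k) 0 ^ 2 <= v t).
 { apply (sm_term (fun k => Rmin (w t k) 0 ^ 2)); auto. intros; apply pow2_ge_0. }
 destruct (Rle_dec 0 (w t k)); auto. rewrite Rmin_left in H by lra.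
 assert (0 < w t k ^ 2) by (simpl; nra). lra.
Qed.

Lemma nonneg t k : 0 <= t -> (1 <= k)%nat -> 0 <= w t k.
Proof. intros Ht Hk. destruct (Compare_dec.le_lt_dec k m).
 2:{ rewrite w_zero; auto; lra. }
 destruct (Req_dec t 0).
 - subst. rewrite (proj1 (proj2 Hw)) by lia. apply hy_nonneg; auto.
 - apply nonneg_pos; [lra|lia]. Qed.

Lemma near0 e t : 0 < e -> 0 < t -> exists s, 0 < s < t /\ forall k, (1 <= k <= m)%nat -> Rabs (w s k - y k) < e.
Proof. intros He Ht.
 assert (at_right 0 (fun s => forall k, (1 <= k <= m)%nat -> Rabs (w s k - y k) < e)).
 { apply at_right_fin. intros k Hk. apply at_right_lim'; auto. apply (proj1 (proj2 (proj2 Hw))); auto. }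
 destruct (at_right_ex _ H) as [d [Hd Hd']]. exists (Rmin (d/2) (t/2)).
 assert (0 < Rmin (d/2) (t/2)) by (apply Rmin_pos; lra). assert (Rmin (d/2) (t/2) <= d/2) by apply Rmin_l.
 assert (Rmin (d/2) (t/2) <= t/2) by apply Rmin_r. split; [lra|]. apply Hd'. lra. Qed.

Definition mass t := sm (fun k => INR k * w t k) m.

Lemma mass_deriv t : 0 < t -> is_derive mass t 0.
Proof. intros Ht. apply is_derive_val with (sm (fun k => INR k * dd t k) m).
 - apply (sm_derive (fun s k => INR k * w s k)). intros k Hk. apply is_derive_scal. apply deriv_w; auto.
 - rewrite (sm_ext _ (fun k => dd t k * INR k)) by (intros; ring). unfold dd. rewrite flux_identity by auto.
   rewrite (sm_ext _ (fun _ => 0)). apply sm_zero. intros l Hl. rewrite S_INR. simpl INR. ring. Qed.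

Lemma mass_const t : 0 <= t -> mass t = sm (fun k => INR k * y k) m.
Proof. intros Ht. destruct (Req_dec t 0).
 { subst. unfold mass. apply sm_ext. intros k Hk. rewrite (proj1 (proj2 Hw)); auto. }
 assert (Ht' : 0 < t) by lra.
 assert (Hc : forall s, 0 < s < t -> mass s = mass t).
 { intros s Hs. symmetry. apply (mvt_const mass (fun _ => 0)); [lra| |auto]. intros; apply mass_deriv; lra. }
 apply Rminus_diag_uniq. apply (small_lin _ (INR m * INR m)). apply Rmult_le_pos; apply pos_INR.
 intros e He. destruct (near0 e t He Ht') as [s [Hs Hk]]. rewrite <- (Hc s Hs). unfold mass.
 rewrite <- sm_minus. eapply Rle_trans; [apply sm_abs|]. rewrite Rmult_assoc, <- sm_const. apply sm_le.
 intros k Hk'. rewrite <- Rmult_minus_distr_l, Rabs_mult, Rabs_right by (apply Rle_ge, pos_INR).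
 apply Rmult_le_compat. apply pos_INR. apply Rabs_pos. apply le_INR; lia. specialize (Hk k Hk'). lra. Qed.

Lemma mass_n t n : 0 <= t -> sm (fun k => INR k * w t k) n <= rh.
Proof. intros Ht. destruct (Compare_dec.le_lt_dec n m).
 - eapply Rle_trans. apply sm_mono; [|apply l]. intros; apply Rmult_le_pos; [apply pos_INR|apply nonneg; auto].
   fold (mass t). rewrite mass_const; auto.
 - rewrite (sm_beyond _ m n). fold (mass t). rewrite mass_const; auto. intros; rewrite w_zero; auto; ring. lia. Qed.

Lemma rh_nonneg : 0 <= rh.
Proof. eapply Rle_trans; [|apply hmass0]. apply sm_nonneg. intros; apply Rmult_le_pos; [apply pos_INR|apply hy_nonneg; lia]. Qed.

Lemma w_le t k : 0 <= t -> (1 <= k)%nat -> w t k <= rh.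
Proof. intros Ht Hk. eapply Rle_trans; [|apply (mass_n t k Ht)].
 eapply Rle_trans; [|apply (sm_term (fun k => INR k * w t k) k k)].
 - assert (1 <= INR k) by (replace 1 with (INR 1) by auto; apply le_INR; auto). pose proof (nonneg t k Ht Hk). nra.
 - intros; apply Rmult_le_pos; [apply pos_INR|apply nonneg; auto; lia].
 - lia. Qed.

Lemma NN_le t : 0 <= t -> NN t <= rh.
Proof. intros Ht. eapply Rle_trans; [|apply (mass_n t m Ht)]. apply sm_le. intros k Hk.
 assert (1 <= INR k) by (replace 1 with (INR 1) by auto; apply le_INR; lia). pose proof (nonneg t k Ht ltac:(lia)). nra. Qed.

Lemma NN_nonneg t : 0 <= t -> 0 <= NN t.
Proof. intros Ht. apply sm_nonneg. intros; apply nonneg; auto; lia. Qed.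

Lemma gw_sum t n : 0 <= t -> sm (fun l => gamma l * w t l) n <= G * rh.
Proof. intros Ht. eapply Rle_trans. apply (sm_le _ (fun l => G * (INR l * w t l))).
 { intros l Hl. rewrite <- Rmult_assoc. apply Rmult_le_compat_r. apply nonneg; auto; lia. apply hG; lia. }
 rewrite sm_scal. apply Rmult_le_compat_l. apply G_nonneg. apply mass_n; auto. Qed.

Lemma pos1 t : 0 < t -> 0 < w t 1%nat.
Proof. intros Ht. set (C1 := 2 * G * rh).
 assert (HG := G_nonneg). assert (Hrh := rh_nonneg).
 assert (Hd : forall s, 0 < s -> - (C1 * w s 1%nat) <= dd s 1%nat).
 { intros s Hs. unfold dd, dflux. simpl Nat.eqb. cbv iota.
   assert (Hl : forall l, (1 <= l <= m - 1)%nat -> - (gamma l * w s l * w s 1%nat) <= - JJ s l).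
   { intros l Hl. rewrite JJ_eq by lra. pose proof (hgamma_pos l ltac:(lia)).
     assert (0 <= NN s * (q l / q (S l)) * w s (S l)).
     { apply Rmult_le_pos. apply Rmult_le_pos. apply NN_nonneg; lra. left; apply r_pos; lia. apply nonneg; [lra|lia]. }
     assert (0 <= gamma l * (NN s * (q l / q (S l)) * w s (S l))) by (apply Rmult_le_pos; lra). nra. }
   assert (- (G * rh * w s 1%nat) <= - sm (JJ s) (m - 1)).
   { rewrite <- sm_opp. eapply Rle_trans; [|apply (sm_le (fun l => - (gamma l * w s l * w s 1%nat)))]; [|auto].
     rewrite sm_opp. rewrite (sm_ext _ (fun l => w s 1%nat * (gamma l * w s l))) by (intros; ring).
     rewrite sm_scal. pose proof (gw_sum s (m-1) ltac:(lra)). pose proof (nonneg s 1 ltac:(lra) (le_n _)). nra. }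
   specialize (Hl 1%nat ltac:(lia)). pose proof (hG 1%nat (le_n _)). simpl INR in H0.
   pose proof (nonneg s 1 ltac:(lra) (le_n _)). pose proof (w_le s 1 ltac:(lra) (le_n _)).
   assert (gamma 1%nat * w s 1%nat * w s 1%nat <= G * rh * w s 1%nat).
   { apply Rmult_le_compat_r; auto. apply mul_le; auto. left; apply hgamma_pos; auto. lra. }
   unfold C1. lra. }
 destruct (near0 (y 1%nat / 2) t ltac:(lra) Ht) as [s [Hs Hk]]. specialize (Hk 1%nat ltac:(lia)).
 apply Rabs_lt_between in Hk.
 assert (exp (C1 * s) * w s 1%nat <= exp (C1 * t) * w t 1%nat).
 { cut (- (exp (C1 * t) * w t 1%nat) <= - (exp (C1 * s) * w s 1%nat)). lra.
   apply (mvt_decr (fun s => - (exp (C1 * s) * w s 1%nat)) (fun s => - (exp (C1 * s) * (dd s 1%nat + C1 * w s 1%nat)))).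
   lra.
   intros x Hx. apply is_derive_val with (- (C1 * exp (C1 * x) * w x 1%nat + exp (C1 * x) * dd x 1%nat)); [|ring].
   apply (is_derive_opp (fun s => exp (C1 * s) * w s 1%nat)). apply (Derive.is_derive_mult (fun s => exp (C1 * s)) (fun s => w s 1%nat)).
   auto_derive; auto; ring. apply deriv_w; [lra|lia].
   intros x Hx. pose proof (Hd x ltac:(lra)). pose proof (exp_pos (C1 * x)). nra. }
 pose proof (exp_pos (C1 * s)). pose proof (exp_pos (C1 * t)).
 assert (0 < exp (C1 * s) * w s 1%nat) by (apply Rmult_lt_0_compat; lra).
 destruct (Rle_dec (w t 1%nat) 0); auto. assert (exp (C1 * t) * w t 1%nat <= 0) by nra. lra. lra. Qed.

Lemma posk k : (1 <= k <= m)%nat -> forall t, 0 < t -> 0 < w t k.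
Proof. induction k as [|k IH]; intros Hk t Ht; [lia|].
 destruct k. apply pos1; auto.
 set (k' := S (S k)) in *.
 assert (HG := G_nonneg). assert (Hrh := rh_nonneg). assert (HRm := Rm_pos).
 set (Ck := G * INR k' * rh * Rm + G * INR k' * rh).
 assert (HkR : 1 <= INR k') by (replace 1 with (INR 1) by auto; apply le_INR; unfold k'; lia).
 assert (Hd : forall s, 0 < s -> gamma (S k) * w s 1%nat * w s (S k) - Ck * w s k' <= dd s k').
 { intros s Hs. assert (Hs0 : 0 <= s) by lra.
   assert (Hloss1 : gamma (S k) * (NN s * (q (S k) / q k')) <= G * INR k' * rh * Rm).
   { replace (G * INR k' * rh * Rm) with ((G * INR k') * (rh * Rm)) by ring.
     apply mul_le. left; apply hgamma_pos; lia. eapply Rle_trans; [apply hG; lia|]. apply Rmult_le_compat_l; auto. apply le_INR; unfold k'; lia.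
     apply Rmult_le_pos. apply NN_nonneg; auto. left; apply r_pos; lia. apply mul_le. apply NN_nonneg; auto. apply NN_le; auto. left; apply r_pos; lia. apply hRm; lia. }
   assert (Hwk : 0 <= w s k') by (apply nonneg; auto; unfold k'; lia).
   unfold dd, dflux. replace (Nat.eqb k' 1) with false by (symmetry; apply Nat.eqb_neq; unfold k'; lia).
   replace (k' - 1)%nat with (S k) by (unfold k'; lia).
   assert (HJ1 : JJ s (S k) = gamma (S k) * w s 1%nat * w s (S k) - gamma (S k) * (NN s * (q (S k) / q k')) * w s k').
   { rewrite JJ_eq by auto. fold k'. ring. }
   assert (H1 : gamma (S k) * (NN s * (q (S k) / q k')) * w s k' <= G * INR k' * rh * Rm * w s k') by (apply Rmult_le_compat_r; auto).
   assert (H2 : 0 <= G * INR k' * rh * w s k') by (apply Rmult_le_pos; auto; apply Rmult_le_pos; auto; apply Rmult_le_pos; lra).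
   destruct (Nat.eqb_spec k' m).
   - rewrite <- e. replace (k' - 1)%nat with (S k) by (unfold k'; lia). rewrite HJ1. unfold Ck. lra.
   - assert (HJ2 : - JJ s k' >= - (gamma k' * w s 1%nat * w s k')).
     { rewrite JJ_eq by auto. assert (0 <= gamma k' * (NN s * (q k' / q (S k')) * w s (S k'))).
       { apply Rmult_le_pos. left; apply hgamma_pos; unfold k'; lia. apply Rmult_le_pos. apply Rmult_le_pos. apply NN_nonneg; auto. left; apply r_pos; unfold k'; lia. apply nonneg; auto; lia. }
       nra. }
     assert (H3 : gamma k' * w s 1%nat * w s k' <= G * INR k' * rh * w s k').
     { apply Rmult_le_compat_r; auto. replace (G * INR k' * rh) with ((G * INR k') * rh) by ring. apply mul_le. left; apply hgamma_pos; unfold k'; lia. apply hG; unfold k'; lia. apply nonneg; auto. apply w_le; auto. }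
     rewrite HJ1. unfold Ck. lra. }
 assert (HC : 0 <= Ck).
 { unfold Ck. assert (0 <= G * INR k' * rh) by (apply Rmult_le_pos; auto; apply Rmult_le_pos; lra).
   assert (0 <= G * INR k' * rh * Rm) by (apply Rmult_le_pos; lra). lra. }
 assert (Hlt : exp (Ck * (t/2)) * w (t/2) k' < exp (Ck * t) * w t k').
 { apply (mvt_incr_strict (fun s => exp (Ck * s) * w s k') (fun s => exp (Ck * s) * (dd s k' + Ck * w s k'))).
   lra.
   intros x Hx. apply is_derive_val with (Ck * exp (Ck * x) * w x k' + exp (Ck * x) * dd x k'); [|ring].
   apply (Derive.is_derive_mult (fun s => exp (Ck * s)) (fun s => w s k')).
   auto_derive; auto; ring. apply deriv_w; [lra|unfold k'; lia].
   intros x Hx. pose proof (Hd x ltac:(lra)). pose proof (exp_pos (Ck * x)).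
   assert (0 < w x 1%nat) by (apply pos1; lra). assert (0 < w x (S k)) by (apply IH; [lia|lra]).
   assert (0 < gamma (S k) * w x 1%nat * w x (S k)) by (apply Rmult_lt_0_compat; [apply Rmult_lt_0_compat; auto; apply hgamma_pos; lia|auto]).
   apply Rmult_lt_0_compat; lra. }
 pose proof (exp_pos (Ck * (t/2))). pose proof (exp_pos (Ck * t)).
 assert (0 <= w (t/2) k') by (apply nonneg; [lra|unfold k'; lia]).
 assert (0 <= exp (Ck * (t/2)) * w (t/2) k') by (apply Rmult_le_pos; lra).
 destruct (Rle_dec (w t k') 0); [|lra]. assert (exp (Ck * t) * w t k' <= 0) by nra. lra. Qed.

Definition SB := G * rh * rh + G * rh * Rm * rh.

Lemma J_abs_le t l : 0 <= t -> (1 <= l)%nat ->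
  Rabs (JJ t l) <= G * rh * (INR l * w t l) + G * rh * Rm * (INR (S l) * w t (S l)).
Proof. intros Ht Hl. rewrite JJ_eq by auto.
 assert (HG := G_nonneg). assert (Hrh := rh_nonneg). assert (HRm := Rm_pos).
 pose proof (hgamma_pos l Hl). pose proof (hG l Hl).
 assert (Hr := r_pos l Hl). assert (Hr' := hRm l Hl).
 pose proof (nonneg t 1 Ht (le_n _)). pose proof (w_le t 1 Ht (le_n _)).
 pose proof (nonneg t l Ht Hl). pose proof (nonneg t (S l) Ht ltac:(lia)).
 pose proof (NN_nonneg t Ht). pose proof (NN_le t Ht).
 set (a := w t 1%nat * w t l). set (b := NN t * (q l / q (S l)) * w t (S l)).
 assert (Ha : 0 <= a) by (apply Rmult_le_pos; auto).
 assert (Hb : 0 <= b) by (apply Rmult_le_pos; [apply Rmult_le_pos; lra|auto]).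
 assert (Rabs (gamma l * (a - b)) <= gamma l * a + gamma l * b).
 { rewrite Rabs_mult, (Rabs_right (gamma l)) by lra. assert (Rabs (a - b) <= a + b) by (apply Rabs_le; lra). nra. }
 assert (gamma l * a <= G * rh * (INR l * w t l)).
 { replace (G * rh * (INR l * w t l)) with ((G * INR l) * (rh * w t l)) by ring.
   apply mul_le; [lra|auto|auto|]. unfold a. apply Rmult_le_compat_r; auto. }
 assert (gamma l * b <= G * rh * Rm * (INR (S l) * w t (S l))).
 { unfold b. replace (G * rh * Rm * (INR (S l) * w t (S l))) with ((G * INR (S l)) * ((rh * Rm) * w t (S l))) by ring.
   apply mul_le. lra. eapply Rle_trans; [apply H0|]. apply Rmult_le_compat_l; auto. apply le_INR; lia.
   apply Rmult_le_pos; [apply Rmult_le_pos; lra|auto].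
   apply Rmult_le_compat_r; auto. apply mul_le; lra. }
 lra. Qed.

Lemma SB_le t : 0 <= t -> sm (fun l => Rabs (JJ t l)) (m - 1) <= SB.
Proof. intros Ht. eapply Rle_trans. apply sm_le. intros l Hl. apply J_abs_le; auto; lia.
 rewrite sm_plus, !sm_scal. unfold SB.
 assert (HG := G_nonneg). assert (Hrh := rh_nonneg). assert (HRm := Rm_pos).
 assert (sm (fun k => INR k * w t k) (m - 1) <= rh) by (apply mass_n; auto).
 assert (sm (fun k => INR (S k) * w t (S k)) (m - 1) <= rh).
 { eapply Rle_trans; [|apply (mass_n t (S (m-1)) Ht)]. rewrite (sm_shift (fun k => INR k * w t k)).
   assert (0 <= INR 1 * w t 1%nat) by (apply Rmult_le_pos; [apply pos_INR|apply nonneg; auto]). lra. }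
 assert (0 <= G * rh) by (apply Rmult_le_pos; auto).
 assert (0 <= G * rh * Rm) by (apply Rmult_le_pos; lra).
 apply Rplus_le_compat; [|replace (G * rh * Rm * rh) with ((G * rh * Rm) * rh) by ring]; apply Rmult_le_compat_l; auto. Qed.

Lemma SB_nonneg : 0 <= SB.
Proof. apply Rle_trans with (sm (fun l => Rabs (JJ 0 l)) (m-1)); [|apply (SB_le 0); lra]. apply sm_nonneg. intros; apply Rabs_pos. Qed.

Lemma JJ_abs_SB t l : 0 <= t -> (1 <= l <= m - 1)%nat -> Rabs (JJ t l) <= SB.
Proof. intros. apply Rle_trans with (sm (fun l => Rabs (JJ t l)) (m-1)); [|apply SB_le; auto].
 apply (sm_term (fun l => Rabs (JJ t l))); auto. intros; apply Rabs_pos. Qed.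

Lemma dd_abs t k : 0 <= t -> (1 <= k <= m)%nat -> Rabs (dd t k) <= 2 * SB.
Proof. intros Ht Hk. pose proof SB_nonneg. unfold dd, dflux. destruct (Nat.eqb_spec k 1).
 - eapply Rle_trans. apply Rabs_triang. rewrite Rabs_Ropp, Rabs_Ropp.
   assert (Rabs (JJ t 1) <= SB) by (apply JJ_abs_SB; auto; lia).
   assert (Rabs (sm (JJ t) (m - 1)) <= SB) by (eapply Rle_trans; [apply sm_abs|apply SB_le; auto]). lra.
 - destruct (Nat.eqb_spec k m).
   + assert (Rabs (JJ t (m-1)) <= SB) by (apply JJ_abs_SB; auto; lia). lra.
   + unfold Rminus. eapply Rle_trans. apply Rabs_triang. rewrite Rabs_Ropp.
     assert (Rabs (JJ t (k-1)) <= SB) by (apply JJ_abs_SB; auto; lia).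
     assert (Rabs (JJ t k) <= SB) by (apply JJ_abs_SB; auto; lia). lra. Qed.

Lemma NN_deriv t : 0 < t -> is_derive NN t (- sm (JJ t) (m - 1)).
Proof. intros Ht. apply is_derive_val with (sm (dd t) m).
 - apply (sm_derive w). intros; apply deriv_w; auto.
 - rewrite (sm_ext _ (fun k => dd t k * 1)) by (intros; ring). unfold dd. rewrite flux_identity by auto.
   rewrite <- sm_opp. apply sm_ext. intros; ring. Qed.

Definition Lip l := gamma l * (2 * SB * rh + rh * (2 * SB) + SB * Rm * rh + rh * Rm * (2 * SB)).

Lemma JJ_lip l t s : (1 <= l)%nat -> (S l <= m)%nat -> 0 < t <= s -> Rabs (JJ s l - JJ t l) <= Lip l * (s - t).
Proof. intros Hl Hlm Hts.
 set (r := q l / q (S l)).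
 set (g := fun s => gamma l * (w s 1%nat * w s l - NN s * r * w s (S l))).
 set (gd := fun s => gamma l * ((dd s 1%nat * w s l + w s 1%nat * dd s l) - ((- sm (JJ s) (m - 1)) * r * w s (S l) + NN s * r * dd s (S l)))).
 assert (Hg : forall x, 0 < x -> is_derive g x (gd x)).
 { intros x Hx. unfold g, gd. apply is_derive_scal. apply (is_derive_minus (fun s => w s 1%nat * w s l) (fun s => NN s * r * w s (S l))).
   - apply (Derive.is_derive_mult (fun s => w s 1%nat) (fun s => w s l)); apply deriv_w; auto; lia.
   - apply (Derive.is_derive_mult (fun s => NN s * r) (fun s => w s (S l))). 2: apply deriv_w; auto; lia.
     apply is_derive_val with (- sm (JJ x) (m - 1) * r + NN x * 0). 2: ring.
     apply (Derive.is_derive_mult NN (fun _ => r)). apply NN_deriv; auto.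
     exact (@is_derive_const R_AbsRing R_NormedModule r x). }
 assert (Hgd : forall x, 0 < x -> Rabs (gd x) <= Lip l).
 { intros x Hx. unfold gd, Lip. assert (Hx0 : 0 <= x) by lra.
   pose proof (hgamma_pos l Hl). rewrite Rabs_mult, Rabs_right by lra. apply Rmult_le_compat_l; [lra|].
   assert (HRm := Rm_pos). assert (Hrh := rh_nonneg). pose proof SB_nonneg.
   assert (Hr : 0 < r <= Rm) by (split; [apply r_pos|apply hRm]; auto).
   assert (A1 : Rabs (dd x 1%nat) <= 2 * SB) by (apply dd_abs; auto; lia).
   assert (A2 : Rabs (dd x l) <= 2 * SB) by (apply dd_abs; auto; lia).
   assert (A3 : Rabs (dd x (S l)) <= 2 * SB) by (apply dd_abs; auto; lia).
   assert (A4 : Rabs (- sm (JJ x) (m - 1)) <= SB) by (rewrite Rabs_Ropp; eapply Rle_trans; [apply sm_abs|apply SB_le; auto]).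
   assert (B1 : Rabs (w x 1%nat) <= rh) by (rewrite Rabs_right; [apply w_le|apply Rle_ge, nonneg]; auto).
   assert (B2 : Rabs (w x l) <= rh) by (rewrite Rabs_right; [apply w_le|apply Rle_ge, nonneg]; auto).
   assert (B3 : Rabs (w x (S l)) <= rh) by (rewrite Rabs_right; [apply w_le|apply Rle_ge, nonneg]; auto; lia).
   assert (B4 : Rabs (NN x) <= rh) by (rewrite Rabs_right; [apply NN_le|apply Rle_ge, NN_nonneg]; auto).
   assert (Hab : forall a b A B, Rabs a <= A -> Rabs b <= B -> Rabs (a * b) <= A * B).
   { intros. rewrite Rabs_mult. apply Rmult_le_compat; auto; apply Rabs_pos. }
   assert (Hrr : Rabs r <= Rm) by (rewrite Rabs_right; lra).
   unfold Rminus. eapply Rle_trans; [apply Rabs_triang|]. rewrite Rabs_Ropp.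
   assert (T1 : Rabs (dd x 1%nat * w x l + w x 1%nat * dd x l) <= 2 * SB * rh + rh * (2 * SB)).
   { eapply Rle_trans; [apply Rabs_triang|]. apply Rplus_le_compat; apply Hab; auto. }
   assert (T2 : Rabs (- sm (JJ x) (m - 1) * r * w x (S l) + NN x * r * dd x (S l)) <= SB * Rm * rh + rh * Rm * (2 * SB)).
   { eapply Rle_trans; [apply Rabs_triang|]. apply Rplus_le_compat; apply Hab; auto; apply Hab; auto. }
   lra. }
 assert (Heq : forall x, 0 <= x -> JJ x l = g x) by (intros; unfold g, r; apply JJ_eq; auto).
 rewrite !Heq by lra. destruct (mvt_le g gd t s) as [c [Hc E]]; [lra|intros; apply Hg; lra|].
 rewrite E, Rabs_mult, (Rabs_right (s - t)) by lra. apply Rmult_le_compat_r; [lra|]. apply Hgd; lra. Qed.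

Definition uu t k := ln (w t k) - ln (q k) - ln (NN t).
Definition Aent t := sm (fun k => w t k * uu t k) m.
Definition Ad t := sm (fun k => dd t k * uu t k) m.

Lemma NN_pos t : 0 < t -> 0 < NN t.
Proof. intros Ht. unfold NN. apply Rlt_le_trans with (w t 1%nat). apply pos1; auto.
 apply (sm_term (w t)). intros; apply nonneg; lra || lia. lia. Qed.

Lemma Aent_deriv t : 0 < t -> is_derive Aent t (Ad t).
Proof. intros Ht. set (Nd := - sm (JJ t) (m - 1)).
 apply is_derive_val with (sm (fun k => dd t k * uu t k + w t k * (dd t k / w t k - Nd / NN t)) m).
 - apply (sm_derive (fun s k => w s k * uu s k)). intros k Hk.
   apply (Derive.is_derive_mult (fun s => w s k) (fun s => uu s k)). apply deriv_w; auto.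
   unfold uu. apply (is_derive_minus (fun s => ln (w s k) - ln (q k)) (fun s => ln (NN s))).
   + apply is_derive_val with (dd t k / w t k - 0); [|ring].
     apply (is_derive_minus (fun s => ln (w s k)) (fun _ => ln (q k))).
     * apply is_derive_val with (dd t k * / w t k); [|unfold Rdiv; ring].
       apply (is_derive_comp ln (fun s => w s k)). apply is_derive_ln. apply posk; auto. apply deriv_w; auto.
     * exact (@is_derive_const R_AbsRing R_NormedModule (ln (q k)) t).
   + apply is_derive_val with (Nd * / NN t); [|unfold Rdiv; ring].
     apply (is_derive_comp ln NN). apply is_derive_ln. apply NN_pos; auto. apply NN_deriv; auto.
 - unfold Ad. rewrite (sm_ext _ (fun k => dd t k * uu t k + (dd t k - Nd / NN t * w t k))).
   2:{ intros k Hk. pose proof (posk k Hk t Ht). pose proof (NN_pos t Ht). assert (w t k <> 0) by lra. assert (NN t <> 0) by lra. field. tauto. }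
   rewrite sm_plus, sm_minus, sm_scal. fold (NN t).
   assert (sm (dd t) m = Nd).
   { unfold Nd. rewrite (sm_ext _ (fun k => dd t k * 1)) by (intros; ring). unfold dd. rewrite flux_identity by auto.
     rewrite <- sm_opp. apply sm_ext. intros; ring. }
   rewrite H. pose proof (NN_pos t Ht). field. lra. Qed.

Definition aa t l := w t 1%nat * w t l.
Definition bb t l := NN t * (q l / q (S l)) * w t (S l).

Lemma Ad_eq t : 0 < t -> Ad t = - sm (fun l => gamma l * (aa t l - bb t l) * (ln (aa t l) - ln (bb t l))) (m - 1).
Proof. intros Ht. unfold Ad, dd. rewrite flux_identity by auto. rewrite <- sm_opp. apply sm_ext.
 intros l Hl. rewrite JJ_eq by lra. unfold uu, aa, bb.
 assert (H1 := posk 1 ltac:(lia) t Ht). assert (Hl' := posk l ltac:(lia) t Ht). assert (Hl'' := posk (S l) ltac:(lia) t Ht).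
 assert (HN := NN_pos t Ht). assert (Hq := hq_pos l ltac:(lia)). assert (Hq' := hq_pos (S l) ltac:(lia)).
 rewrite !ln_mult; try (apply Rmult_lt_0_compat); auto; try (apply Rdiv_lt_0_compat; auto).
 rewrite ln_div by auto. rewrite hq1, ln_1. ring. all: try apply Rinv_0_lt_compat; auto. Qed.

Definition Kab := rh * rh + rh * Rm * rh.

Lemma Ad_bounds t l : 0 < t -> (1 <= l <= m - 1)%nat ->
  Ad t <= 0 /\ Ad t <= - (JJ t l ^ 2 / (gamma l * Kab)).
Proof. intros Ht Hl. rewrite Ad_eq by auto.
 set (T := fun l => gamma l * (aa t l - bb t l) * (ln (aa t l) - ln (bb t l))).
 assert (Hpos : forall l, (1 <= l <= m - 1)%nat -> 0 < aa t l /\ 0 < bb t l).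
 { intros l0 Hl0. unfold aa, bb. split. apply Rmult_lt_0_compat; apply posk; auto; lia.
   apply Rmult_lt_0_compat. apply Rmult_lt_0_compat. apply NN_pos; auto. apply r_pos; lia. apply posk; auto; lia. }
 assert (HT : forall l, (1 <= l <= m - 1)%nat -> gamma l * ((aa t l - bb t l) ^ 2 / (aa t l + bb t l)) <= T l).
 { intros l0 Hl0. unfold T. rewrite Rmult_assoc. apply Rmult_le_compat_l. left; apply hgamma_pos; lia.
   destruct (Hpos l0 Hl0). apply diss_ineq; auto. }
 assert (HT0 : forall l, (1 <= l <= m - 1)%nat -> 0 <= T l).
 { intros l0 Hl0. eapply Rle_trans; [|apply HT; auto]. destruct (Hpos l0 Hl0). apply Rmult_le_pos. left; apply hgamma_pos; lia.
   apply Rdiv_le_0_compat. apply pow2_ge_0. lra. }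
 split. { assert (0 <= sm T (m - 1)) by (apply sm_nonneg; auto). lra. }
 assert (T l <= sm T (m - 1)) by (apply sm_term; auto).
 cut (JJ t l ^ 2 / (gamma l * Kab) <= T l). lra.
 eapply Rle_trans; [|apply HT; auto]. destruct (Hpos l Hl).
 rewrite JJ_eq by lra. fold (aa t l) (bb t l).
 assert (Hg := hgamma_pos l ltac:(lia)).
 assert (Hab : aa t l + bb t l <= Kab).
 { unfold aa, bb, Kab. assert (Hrh := rh_nonneg). assert (HRm := Rm_pos). apply Rplus_le_compat.
   apply mul_le; try apply nonneg; try apply w_le; lra || lia.
   apply mul_le. apply Rmult_le_pos. apply NN_nonneg; lra. left; apply r_pos; lia.
   apply mul_le. apply NN_nonneg; lra. apply NN_le; lra. left; apply r_pos; lia. apply hRm; lia.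
   apply nonneg; lra || lia. apply w_le; lra || lia. }
 replace ((gamma l * (aa t l - bb t l)) ^ 2 / (gamma l * Kab)) with (gamma l * ((aa t l - bb t l) ^ 2 / Kab)) by (field; split; lra).
 apply Rmult_le_compat_l; [lra|]. unfold Rdiv. apply Rmult_le_compat_l. apply pow2_ge_0.
 apply Rinv_le_contravar; lra. Qed.

Lemma A_mono t s : 0 < t <= s -> Aent s <= Aent t.
Proof. intros H. apply (mvt_decr Aent Ad); [lra| |]. intros; apply Aent_deriv; lra.
 intros x Hx. apply (Ad_bounds x 1); [lra|lia]. Qed.

Lemma A_drop l a b e : (1 <= l <= m - 1)%nat -> 0 < a <= b -> (forall x, a <= x <= b -> e <= Rabs (JJ x l)) -> 0 <= e ->
  Aent b <= Aent a - (e ^ 2 / (gamma l * Kab)) * (b - a).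
Proof. intros Hl Hab Hx He. apply (mvt_drop Aent Ad); [lra| |]. intros; apply Aent_deriv; lra.
 intros x Hx'. destruct (Ad_bounds x l ltac:(lra) Hl) as [_ H]. eapply Rle_trans; [apply H|].
 apply Ropp_le_contravar. assert (Hg := hgamma_pos l ltac:(lia)).
 assert (0 < Kab). { unfold Kab. pose proof (NN_pos x ltac:(lra)). pose proof (NN_le x ltac:(lra)). assert (HRm := Rm_pos).
   assert (0 < rh * rh) by (apply Rmult_lt_0_compat; lra). assert (0 <= rh * Rm * rh) by (apply Rmult_le_pos; [apply Rmult_le_pos|]; lra). lra. }
 unfold Rdiv. apply Rmult_le_compat_r. left; apply Rinv_0_lt_compat, Rmult_lt_0_compat; auto.
 specialize (Hx x Hx'). rewrite <- (pow2_abs (JJ x l)).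
 apply pow_incr. lra. Qed.

Lemma be_nonneg : 0 <= be.
Proof. pose proof (hlq 1%nat (le_n _)). simpl INR in H. pose proof (Rabs_pos (ln (q 1%nat))). lra. Qed.

Lemma A_upper t : 0 < t -> Aent t <= be * rh.
Proof. intros Ht. unfold Aent, uu.
 eapply Rle_trans. apply (sm_le _ (fun k => be * (INR k * w t k))).
 { intros k Hk. pose proof (posk k Hk t Ht). pose proof (hlq k ltac:(lia)).
   assert (ln (w t k) <= ln (NN t)) by (apply ln_le; auto; apply (sm_term (w t)); auto; intros; apply nonneg; lra || lia).
   apply Rabs_le_between in H0. nra. }
 rewrite sm_scal. apply Rmult_le_compat_l. apply be_nonneg. apply mass_n; lra. Qed.

Lemma A_lower t : 0 < t -> - (rh + 1 + rh * rh + be * rh) <= Aent t.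
Proof. intros Ht. unfold Aent, uu.
 rewrite (sm_ext _ (fun k => (w t k * ln (w t k) - w t k * ln (q k)) - ln (NN t) * w t k)) by (intros; ring).
 rewrite sm_minus, sm_scal, sm_minus. fold (NN t).
 assert (H1 : - rh - 1 <= sm (fun k => w t k * ln (w t k)) m).
 { eapply Rle_trans; [|apply (sm_le (fun k => - (INR k * w t k) - exp (- (INR k + 1))))].
   rewrite sm_minus, sm_opp. pose proof (mass_n t m ltac:(lra)). pose proof (exp_sum_le m). lra.
   intros k Hk. pose proof (xlnx_lb (w t k) k (posk k Hk t Ht)). lra. }
 assert (H2 : sm (fun k => w t k * ln (q k)) m <= be * rh).
 { eapply Rle_trans. apply (sm_le _ (fun k => be * (INR k * w t k))).
   { intros k Hk. pose proof (posk k Hk t Ht). pose proof (hlq k ltac:(lia)). apply Rabs_le_between in H0. nra. }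
   rewrite sm_scal. apply Rmult_le_compat_l. apply be_nonneg. apply mass_n; lra. }
 assert (H3 : ln (NN t) * NN t <= rh * rh).
 { pose proof (NN_pos t Ht). pose proof (NN_le t ltac:(lra)). pose proof (ln_le_xm1 (NN t) H). nra. }
 lra. Qed.

Lemma trunc_summary :
  (forall t k, 0 <= t -> (1 <= k)%nat -> 0 <= w t k) /\
  (forall t n, 0 <= t -> sm (fun k => INR k * w t k) n <= rh) /\
  (forall t k, 0 <= t -> (m < k)%nat -> w t k = 0) /\
  (forall l t s, (1 <= l)%nat -> (S l <= m)%nat -> 0 < t <= s ->
     Rabs (Jp q gamma l (w s) - Jp q gamma l (w t)) <= Lip l * (s - t)) /\
  (forall t, 0 < t -> - (rh + 1 + rh * rh + be * rh) <= Aent t <= be * rh) /\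
  (forall t s, 0 < t <= s -> Aent s <= Aent t) /\
  (forall l a b e, (1 <= l <= m - 1)%nat -> 0 < a <= b -> (forall x, a <= x <= b -> e <= Rabs (Jp q gamma l (w x))) -> 0 <= e ->
     Aent b <= Aent a - (e ^ 2 / (gamma l * Kab)) * (b - a)).
Proof. split; [apply nonneg|]. split; [apply mass_n|]. split; [apply w_zero|].
 split; [intros; apply JJ_lip; auto|]. split; [intros; split; [apply A_lower|apply A_upper]; auto|].
 split; [apply A_mono|]. apply A_drop. Qed.

End Trunc.




Lemma finite_max (u : nat -> R) N : exists B, forall n, (n < N)%nat -> u n <= B.
Proof. induction N. exists 0. intros; lia. destruct IHN as [B HB]. exists (Rmax B (u N)).
 intros n Hn. destruct (Nat.eq_dec n N). subst; apply Rmax_r. eapply Rle_trans; [apply HB; lia|apply Rmax_l]. Qed.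

Lemma finite_min_pos (u : nat -> R) N : (forall n, 0 < u n) -> exists c, 0 < c /\ forall n, (n < N)%nat -> c <= u n.
Proof. intros Hu. induction N. exists 1. split; [lra|intros; lia]. destruct IHN as [c [Hc HB]]. exists (Rmin c (u N)).
 split. apply Rmin_pos; auto. intros n Hn. destruct (Nat.eq_dec n N). subst; apply Rmin_r. eapply Rle_trans; [apply Rmin_l|apply HB; lia]. Qed.

Lemma lim_bounded_above (u : nat -> R) (L : R) : is_lim_seq u L -> exists B, forall n, u n <= B.
Proof. intros H. apply is_lim_seq_spec in H. destruct (H (mkposreal 1 Rlt_0_1)) as [N HN].
 destruct (finite_max u N) as [B HB]. exists (Rmax B (L + 1)). intros n. destruct (Compare_dec.le_lt_dec N n).
 - specialize (HN n l). simpl in HN. apply Rabs_lt_between in HN. eapply Rle_trans; [|apply Rmax_r]. lra.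
 - eapply Rle_trans; [apply HB; auto|apply Rmax_l]. Qed.

Lemma lim_bounded_below_pos (u : nat -> R) (L : R) : is_lim_seq u L -> 0 < L -> (forall n, 0 < u n) ->
  exists c, 0 < c /\ forall n, c <= u n.
Proof. intros H HL Hu. apply is_lim_seq_spec in H. destruct (H (mkposreal (L/2) ltac:(lra))) as [N HN].
 destruct (finite_min_pos u N Hu) as [c [Hc HB]]. exists (Rmin c (L/2)). split. apply Rmin_pos; lra.
 intros n. destruct (Compare_dec.le_lt_dec N n).
 - specialize (HN n l). simpl in HN. apply Rabs_lt_between in HN. eapply Rle_trans; [apply Rmin_r|]. lra.
 - eapply Rle_trans; [apply Rmin_l|apply HB; auto]. Qed.

Lemma lim_le (u : nat -> R) (L B : R) : is_lim_seq u L -> (exists N, forall n, (N <= n)%nat -> u n <= B) -> L <= B.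
Proof. intros H [N HN]. assert (Rbar_le L B). { apply (is_lim_seq_le_loc u (fun _ => B)); auto. exists N; auto. apply is_lim_seq_const. }
 simpl in H0. auto. Qed.

Lemma lim_ge (u : nat -> R) (L B : R) : is_lim_seq u L -> (exists N, forall n, (N <= n)%nat -> B <= u n) -> B <= L.
Proof. intros H [N HN]. assert (Rbar_le B L). { apply (is_lim_seq_le_loc (fun _ => B) u); auto. exists N; auto. apply is_lim_seq_const. }
 simpl in H0. auto. Qed.

Lemma sm_le_Series f n : ex_series (fun k => f (S k)) -> (forall k, (1 <= k)%nat -> 0 <= f k) -> sm f n <= Series (fun k => f (S k)).
Proof. intros He Hf. apply (lim_ge (fun p => sm f p)). apply Series_sm_limit; auto.
 exists n. intros p Hp. apply sm_mono; auto. Qed.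

Lemma sm_split f L d : sm f (L + d) = sm f L + sm (fun k => f (L + k)%nat) d.
Proof. induction d. rewrite Nat.add_0_r. replace (sm (fun k => f (L + k)%nat) 0) with 0 by reflexivity. lra.
 replace (L + S d)%nat with (S (L + d)) by lia. simpl sm. rewrite IHd. replace (L + S d)%nat with (S (L + d)) by lia. lra. Qed.

Lemma sm_tail f L n : (1 <= L)%nat -> (L <= n)%nat -> (forall k, (1 <= k)%nat -> 0 <= f k) ->
  sm f n - sm f L <= / INR L * sm (fun k => INR k * f k) n.
Proof. intros HL Hn Hf. replace n with (L + (n - L))%nat by lia. rewrite sm_split.
 assert (HLR : 0 < INR L) by (apply lt_0_INR; lia).
 apply Rle_trans with (/ INR L * sm (fun k => INR (L + k) * f (L + k)%nat) (n - L)).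
 - rewrite <- sm_scal. replace (sm f L + sm (fun k => f (L + k)%nat) (n - L) - sm f L) with (sm (fun k => f (L + k)%nat) (n - L)) by ring.
   apply sm_le. intros k Hk. rewrite <- Rmult_assoc. rewrite <- (Rmult_1_l (f (L + k)%nat)) at 1.
   apply Rmult_le_compat_r. apply Hf; lia. rewrite plus_INR. apply (Rmult_le_reg_l (INR L)); auto.
   field_simplify; [|lra]. pose proof (pos_INR k). lra.
 - apply Rmult_le_compat_l. left; apply Rinv_0_lt_compat; auto. rewrite sm_split.
   assert (0 <= sm (fun k => INR k * f k) L) by (apply sm_nonneg; intros; apply Rmult_le_pos; [apply pos_INR|apply Hf; lia]). lra. Qed.

Lemma ex_series_le_R (a b : nat -> R) : (forall n, Rabs (a n) <= b n) -> ex_series b -> ex_series a.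
Proof. intros H Hb. apply (@ex_series_le R_AbsRing R_CompleteNormedModule a b); auto. Qed.

Lemma nat_above r : exists n : nat, r < INR n.
Proof. destruct (nfloor_ex (Rmax r 0) (Rmax_r r 0)) as [n Hn]. exists (S n). rewrite S_INR.
 pose proof (Rmax_l r 0). lra. Qed.

Lemma ex_series_plus_R (a b : nat -> R) : ex_series a -> ex_series b -> ex_series (fun n => a n + b n).
Proof. intros [la Ha] [lb Hb]. exists (la + lb). exact (is_series_plus a b la lb Ha Hb). Qed.

Lemma ex_series_scal_R (c : R) (a : nat -> R) : ex_series a -> ex_series (fun n => c * a n).
Proof. intros [la Ha]. exists (c * la). exact (is_series_scal c a la Ha). Qed.


Section Main.
Variables (q gamma y : nat -> R) (Rlim : R).
Hypothesis hq_pos : forall l, (1 <= l)%nat -> 0 < q l.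
Hypothesis hq1 : q 1%nat = 1.
Hypothesis hR : is_lim_seq (fun l => q (S l) / q (S (S l))) Rlim.
Hypothesis hR_pos : 0 < Rlim.
Hypothesis hgamma_pos : forall l, (1 <= l)%nat -> 0 < gamma l.
Hypothesis hgamma : is_lim_seq (fun l => gamma (S l) / INR (S l)) 0.
Hypothesis hy_nonneg : forall l, (1 <= l)%nat -> 0 <= y l.
Hypothesis hyX : inX y.
Hypothesis hy1 : 0 < y 1%nat.
Hypothesis hrho : 0 < rho y.
Variable zm : nat -> R -> nat -> R.
Hypothesis hzm : forall m, (2 <= m)%nat -> trunc_sol q gamma y m (zm m).
Variable z : R -> nat -> R.
Hypothesis hz_cont : cont_into_X z.
Variable phi : nat -> nat.
Hypothesis hphi : forall j, (phi j < phi (S j))%nat.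
Hypothesis hconv : forall l, (1 <= l)%nat -> forall T, 0 <= T -> forall eps, 0 < eps ->
     exists N, forall j, (N <= j)%nat -> forall t, 0 <= t <= T ->
       Rabs (zm (phi j) t l - z t l) < eps.

Lemma consts : exists G Rm be, (forall k, (1 <= k)%nat -> gamma k <= G * INR k) /\
  (forall k, (1 <= k)%nat -> q k / q (S k) <= Rm) /\ (forall k, (1 <= k)%nat -> Rabs (ln (q k)) <= be * INR k).
Proof.
 destruct (lim_bounded_above _ _ hgamma) as [G HG].
 destruct (lim_bounded_above _ _ hR) as [Rm HRm].
 destruct (lim_bounded_below_pos _ _ hR hR_pos) as [c [Hc HcB]].
 { intros n. apply Rdiv_lt_0_compat; apply hq_pos; lia. }
 assert (Hr : forall k, (1 <= k)%nat -> c <= q k / q (S k) <= Rm).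
 { intros k Hk. destruct k; [lia|]. split; [apply HcB|apply HRm]. }
 exists G, Rm, (Rabs (ln c) + Rabs (ln Rm)). split; [|split].
 - intros k Hk. destruct k; [lia|]. specialize (HG k). assert (0 < INR (S k)) by (apply lt_0_INR; lia).
   apply (Rmult_le_compat_r (INR (S k))) in HG; [|lra]. unfold Rdiv in HG. rewrite Rmult_assoc, Rinv_l in HG by lra. lra.
 - intros k Hk. apply Hr; auto.
 - assert (Hl : forall k, (1 <= k)%nat -> Rabs (ln (q k / q (S k))) <= Rabs (ln c) + Rabs (ln Rm)).
   { intros k Hk. destruct (Hr k Hk). assert (0 < q k / q (S k)) by lra.
     assert (ln c <= ln (q k / q (S k))) by (apply ln_le; auto).
     assert (ln (q k / q (S k)) <= ln Rm) by (apply ln_le; auto).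
     apply Rabs_le. pose proof (Rabs_pos (ln c)). pose proof (Rabs_pos (ln Rm)).
     pose proof (Rle_abs (ln Rm)). pose proof (Rle_abs (- ln c)) as Hn. rewrite Rabs_Ropp in Hn. lra. }
   set (b := Rabs (ln c) + Rabs (ln Rm)). assert (Hb : 0 <= b) by (unfold b; pose proof (Rabs_pos (ln c)); pose proof (Rabs_pos (ln Rm)); lra).
   intros k Hk. induction k; [lia|]. destruct k.
   + rewrite hq1, ln_1, Rabs_R0. simpl. lra.
   + specialize (IHk ltac:(lia)). specialize (Hl (S k) ltac:(lia)).
     rewrite ln_div in Hl by (apply hq_pos; lia).
     assert (Rabs (ln (q (S (S k)))) <= Rabs (ln (q (S k))) + Rabs (ln (q (S k)) - ln (q (S (S k))))).
     { replace (ln (q (S (S k)))) with (ln (q (S k)) + - (ln (q (S k)) - ln (q (S (S k))))) at 1 by ring.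
       eapply Rle_trans; [apply Rabs_triang|]. rewrite Rabs_Ropp. lra. }
     rewrite (S_INR (S k)), Rmult_plus_distr_l, Rmult_1_r. fold b in Hl. lra.
Qed.

Lemma hmass m : sm (fun k => INR k * y k) m <= rho y.
Proof. unfold rho. apply (sm_le_Series (fun k => INR k * y k)).
 - destruct hyX as [L HL]. exists L. eapply filterlim_ext; [|apply HL]. intros n. apply sum_n_ext. intros k.
   rewrite Rabs_right; auto. apply Rle_ge, hy_nonneg; lia.
 - intros; apply Rmult_le_pos; [apply pos_INR|apply hy_nonneg; auto]. Qed.

Lemma phi_ge j : (j <= phi j)%nat.
Proof. induction j; [lia|]. specialize (hphi j). lia. Qed.

Section Main2.
Variables (G Rm be : R).
Hypothesis hG : forall k, (1 <= k)%nat -> gamma k <= G * INR k.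
Hypothesis hRm : forall k, (1 <= k)%nat -> q k / q (S k) <= Rm.
Hypothesis hlq : forall k, (1 <= k)%nat -> Rabs (ln (q k)) <= be * INR k.

Definition rh := rho y.
Definition W j := zm (phi j).

Lemma summ j : (2 <= j)%nat ->
  (forall t k, 0 <= t -> (1 <= k)%nat -> 0 <= W j t k) /\
  (forall t n, 0 <= t -> sm (fun k => INR k * W j t k) n <= rh) /\
  (forall t k, 0 <= t -> (phi j < k)%nat -> W j t k = 0) /\
  (forall l t s, (1 <= l)%nat -> (S l <= phi j)%nat -> 0 < t <= s ->
     Rabs (Jp q gamma l (W j s) - Jp q gamma l (W j t)) <= Lip gamma G Rm rh l * (s - t)) /\
  (forall t, 0 < t -> - (rh + 1 + rh * rh + be * rh) <= Aent q (phi j) (W j) t <= be * rh) /\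
  (forall t s, 0 < t <= s -> Aent q (phi j) (W j) s <= Aent q (phi j) (W j) t) /\
  (forall l a b e, (1 <= l <= phi j - 1)%nat -> 0 < a <= b -> (forall x, a <= x <= b -> e <= Rabs (Jp q gamma l (W j x))) -> 0 <= e ->
     Aent q (phi j) (W j) b <= Aent q (phi j) (W j) a - (e ^ 2 / (gamma l * Kab Rm rh)) * (b - a)).
Proof. intros Hj. assert (Hm : (2 <= phi j)%nat) by (pose proof (phi_ge j); lia).
 apply (trunc_summary q gamma y (phi j) (W j) G Rm rh be Hm (hzm _ Hm) hq_pos hq1 hgamma_pos hy_nonneg hy1 hG hRm (hmass _) hlq). Qed.

Lemma L1 t k : 0 <= t -> (1 <= k)%nat -> is_lim_seq (fun j => W j t k) (z t k).
Proof. intros Ht Hk. apply is_lim_seq_spec. intros eps. destruct (hconv k Hk t Ht eps (cond_pos eps)) as [N HN].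
 exists N. intros j Hj. apply HN; auto. lra. Qed.

Lemma z_nonneg t k : 0 <= t -> (1 <= k)%nat -> 0 <= z t k.
Proof. intros Ht Hk. apply (lim_ge _ _ _ (L1 t k Ht Hk)). exists 2%nat. intros j Hj. apply (summ j Hj); auto. Qed.

Lemma z_mass t n : 0 <= t -> sm (fun k => INR k * z t k) n <= rh.
Proof. intros Ht. apply (lim_le (fun j => sm (fun k => INR k * W j t k) n)).
 - apply (sm_lim (fun j k => INR k * W j t k)). intros k Hk. apply is_lim_seq_mult'; [apply is_lim_seq_const|apply L1; auto; lia].
 - exists 2%nat. intros j Hj. apply (summ j Hj); auto. Qed.

Lemma rh_pos : 0 < rh.
Proof. exact hrho. Qed.

Lemma z_le t k : 0 <= t -> (1 <= k)%nat -> z t k <= rh.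
Proof. intros Ht Hk. eapply Rle_trans; [|apply (z_mass t k Ht)].
 eapply Rle_trans; [|apply (sm_term (fun k => INR k * z t k) k k)].
 - assert (1 <= INR k) by (replace 1 with (INR 1) by auto; apply le_INR; auto). pose proof (z_nonneg t k Ht Hk). nra.
 - intros; apply Rmult_le_pos; [apply pos_INR|apply z_nonneg; auto; lia].
 - lia. Qed.

Lemma z_ex_series t : 0 <= t -> ex_series (fun k => z t (S k)).
Proof. intros Ht. apply (ex_series_le_R _ (fun k => INR (S k) * Rabs (z t (S k)))).
 - intros n.
   assert (1 <= INR (S n)) by (replace 1 with (INR 1) by auto; apply le_INR; lia). pose proof (Rabs_pos (z t (S n))). nra.
 - apply (proj1 hz_cont); auto. Qed.

Lemma z_N_lim t : 0 <= t -> is_lim_seq (fun n => sm (z t) n) (Nz (z t)).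
Proof. intros Ht. apply Series_sm_limit. apply z_ex_series; auto. Qed.

Lemma z_N_bounds t : 0 <= t -> 0 <= Nz (z t) <= rh.
Proof. intros Ht. split.
 - apply (lim_ge _ _ _ (z_N_lim t Ht)). exists 0%nat. intros. apply sm_nonneg. intros; apply z_nonneg; auto; lia.
 - apply (lim_le _ _ _ (z_N_lim t Ht)). exists 0%nat. intros n _. eapply Rle_trans; [|apply (z_mass t n Ht)].
   apply sm_le. intros k Hk. assert (1 <= INR k) by (replace 1 with (INR 1) by auto; apply le_INR; lia).
   pose proof (z_nonneg t k Ht ltac:(lia)). nra. Qed.

Lemma z_N_tail t L : 0 <= t -> (1 <= L)%nat -> 0 <= Nz (z t) - sm (z t) L <= rh / INR L.
Proof. intros Ht HL. assert (HLR : 0 < INR L) by (apply lt_0_INR; lia). split.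
 - cut (sm (z t) L <= Nz (z t)). lra. apply (lim_ge _ _ _ (z_N_lim t Ht)). exists L. intros n Hn. apply sm_mono; auto.
   intros; apply z_nonneg; auto.
 - cut (Nz (z t) <= rh / INR L + sm (z t) L). lra. apply (lim_le _ _ _ (z_N_lim t Ht)). exists L. intros n Hn.
   pose proof (sm_tail (z t) L n HL Hn (fun k Hk => z_nonneg t k Ht Hk)). pose proof (z_mass t n Ht).
   assert (/ INR L * sm (fun k => INR k * z t k) n <= rh / INR L).
   { unfold Rdiv. rewrite Rmult_comm. apply Rmult_le_compat_r; auto. left; apply Rinv_0_lt_compat; auto. }
   lra. Qed.

Lemma W_N_tail j t L : (2 <= j)%nat -> 0 <= t -> (1 <= L)%nat -> (L <= phi j)%nat ->
  0 <= Nz (W j t) - sm (W j t) L <= rh / INR L.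
Proof. intros Hj Ht HL HLj. destruct (summ j Hj) as [S1 [S2 [S3 _]]].
 assert (HLR : 0 < INR L) by (apply lt_0_INR; lia).
 assert (HN : Nz (W j t) = sm (W j t) (phi j)) by (unfold Nz; apply Series_trunc; intros; apply S3; auto).
 rewrite HN. split.
 - cut (sm (W j t) L <= sm (W j t) (phi j)). lra. apply sm_mono; auto.
 - pose proof (sm_tail (W j t) L (phi j) HL HLj (fun k Hk => S1 t k Ht Hk)). pose proof (S2 t (phi j) Ht).
   assert (/ INR L * sm (fun k => INR k * W j t k) (phi j) <= rh / INR L).
   { unfold Rdiv. rewrite Rmult_comm. apply Rmult_le_compat_r; auto. left; apply Rinv_0_lt_compat; auto. }
   lra. Qed.

Lemma L6 t : 0 <= t -> is_lim_seq (fun j => Nz (W j t)) (Nz (z t)).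
Proof. intros Ht. apply is_lim_seq_spec. intros eps.
 destruct (nat_above (3 * rh / eps)) as [L HLR].
 assert (Hrh := rh_pos). assert (He := cond_pos eps).
 assert (H3 : 0 < 3 * rh / eps) by (apply Rdiv_lt_0_compat; lra).
 assert (HL1 : (1 <= L)%nat). { destruct L. simpl in HLR. lra. lia. }
 assert (HL0 : 0 < INR L) by lra.
 assert (Hsmall : rh / INR L < eps / 3).
 { assert (3 * rh < eps * INR L).
   { replace (3*rh) with (eps * (3*rh/eps)) by (field; lra). apply Rmult_lt_compat_l; lra. }
   apply (Rmult_lt_reg_r (INR L)); auto. replace (rh / INR L * INR L) with rh by (field; lra). lra. }
 assert (Hs : is_lim_seq (fun j => sm (W j t) L) (sm (z t) L)) by (apply sm_lim; intros; apply L1; auto; lia).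
 apply is_lim_seq_spec in Hs. destruct (Hs (mkposreal (eps/3) ltac:(lra))) as [N HN].
 exists (Nat.max N (Nat.max 2 L)). intros j Hj. specialize (HN j ltac:(lia)). simpl in HN.
 pose proof (W_N_tail j t L ltac:(lia) Ht HL1 ltac:(pose proof (phi_ge j); lia)).
 pose proof (z_N_tail t L Ht HL1). apply Rabs_lt_between in HN. apply Rabs_lt_between. lra. Qed.

Lemma L7 t l : 0 <= t -> (1 <= l)%nat -> is_lim_seq (fun j => Jp q gamma l (W j t)) (Jp q gamma l (z t)).
Proof. intros Ht Hl. unfold Jp. apply is_lim_seq_mult'; [apply is_lim_seq_const|].
 apply (is_lim_seq_minus' (fun j => W j t 1%nat * W j t l) (fun j => Nz (W j t) * (q l / q (S l)) * W j t (S l))).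
 - apply is_lim_seq_mult'; apply L1; auto; lia.
 - apply is_lim_seq_mult'. apply is_lim_seq_mult'. apply L6; auto. apply is_lim_seq_const. apply L1; auto; lia. Qed.

Lemma Lip_nonneg l : (1 <= l)%nat -> 0 <= Lip gamma G Rm rh l.
Proof. intros Hl. unfold Lip, SB. pose proof (hgamma_pos l Hl). assert (Hrh := rh_pos).
 assert (HG : 0 <= G) by (pose proof (hG 1%nat (le_n _)); pose proof (hgamma_pos 1%nat (le_n _)); simpl in *; lra).
 assert (HRm : 0 < Rm) by (pose proof (hRm 1%nat (le_n _)); assert (0 < q 1%nat / q 2%nat) by (apply Rdiv_lt_0_compat; apply hq_pos; lia); lra).
 assert (0 <= G * rh * rh + G * rh * Rm * rh).
 { assert (0 <= G * rh) by (apply Rmult_le_pos; lra). assert (0 <= G * rh * Rm) by (apply Rmult_le_pos; lra).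
   assert (0 <= G * rh * rh) by (apply Rmult_le_pos; lra). assert (0 <= G * rh * Rm * rh) by (apply Rmult_le_pos; lra). lra. }
 apply Rmult_le_pos; [lra|]. set (S0 := G * rh * rh + G * rh * Rm * rh) in *.
 assert (0 <= S0 * rh) by (apply Rmult_le_pos; lra). assert (0 <= S0 * Rm * rh) by (apply Rmult_le_pos; [apply Rmult_le_pos|]; lra).
 assert (0 <= rh * Rm * S0) by (apply Rmult_le_pos; [apply Rmult_le_pos|]; lra). nra. Qed.

Lemma Kab_pos : 0 < Kab Rm rh.
Proof. unfold Kab. assert (Hrh := rh_pos).
 assert (HRm : 0 < Rm) by (pose proof (hRm 1%nat (le_n _)); assert (0 < q 1%nat / q 2%nat) by (apply Rdiv_lt_0_compat; apply hq_pos; lia); lra).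
 assert (0 < rh * rh) by (apply Rmult_lt_0_compat; lra). assert (0 <= rh * Rm * rh) by (apply Rmult_le_pos; [apply Rmult_le_pos|]; lra). lra. Qed.

Lemma Jl_lim l : (1 <= l)%nat -> forall eps, 0 < eps -> exists M, forall t, M < t -> Rabs (Jp q gamma l (z t)) < eps.
Proof. intros Hl eps He.
 destruct (classic (exists M, forall t, M < t -> Rabs (Jp q gamma l (z t)) < eps)) as [H|Hn]; auto. exfalso.
 assert (Hbig : forall M, exists t, M < t /\ eps <= Rabs (Jp q gamma l (z t))).
 { intros M. destruct (classic (exists t, M < t /\ eps <= Rabs (Jp q gamma l (z t)))) as [H|H]; auto.
   exfalso. apply Hn. exists M. intros t Ht. destruct (Rlt_le_dec (Rabs (Jp q gamma l (z t))) eps); auto. exfalso. apply H. exists t; auto. }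
 set (Lp := Lip gamma G Rm rh l). assert (HLp : 0 <= Lp) by (apply Lip_nonneg; auto).
 set (d := eps / (4 * (Lp + 1))). assert (Hd : 0 < d) by (unfold d; apply Rdiv_lt_0_compat; lra).
 assert (HLd : Lp * d <= eps / 4).
 { unfold d. apply (Rmult_le_reg_r (4 * (Lp + 1))). lra.
   replace (Lp * (eps / (4 * (Lp + 1))) * (4 * (Lp + 1))) with (Lp * eps) by (field; lra).
   replace (eps / 4 * (4 * (Lp + 1))) with (eps * Lp + eps) by field. nra. }
 assert (Hg := hgamma_pos l Hl). assert (HK := Kab_pos).
 set (eta := (eps / 4) ^ 2 / (gamma l * Kab Rm rh) * d).
 assert (Heta : 0 < eta). { unfold eta. apply Rmult_lt_0_compat; auto. apply Rdiv_lt_0_compat. apply pow_lt; lra. apply Rmult_lt_0_compat; auto. }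
 set (A := fun j => Aent q (phi j) (W j)).
 assert (Claim : forall K : nat, exists T0, 1 <= T0 /\ exists j0, (l + 2 <= j0)%nat /\
           forall j, (j0 <= j)%nat -> INR K * eta <= A j 1 - A j T0).
 { induction K.
   - exists 1. split; [lra|]. exists (l+2)%nat. split; [lia|]. intros. simpl. lra.
   - destruct IHK as [T0 [HT0 [j0 [Hj0 HA]]]]. destruct (Hbig T0) as [t [Ht1 Ht2]].
     pose proof (L7 t l ltac:(lra) Hl) as HL7. apply is_lim_seq_spec in HL7.
     destruct (HL7 (mkposreal (eps/2) ltac:(lra))) as [N1 HN1].
     exists (t + d). split; [lra|]. exists (Nat.max j0 N1). split; [lia|]. intros j Hj.
     assert (Hj2 : (2 <= j)%nat) by lia. assert (Hpj := phi_ge j).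
     destruct (summ j Hj2) as [_ [_ [_ [S4 [S5 [S6 S7]]]]]].
     specialize (HN1 j ltac:(lia)). simpl in HN1.
     assert (HJt : eps / 2 <= Rabs (Jp q gamma l (W j t))).
     { pose proof (Rabs_triang_inv (Jp q gamma l (z t)) (Jp q gamma l (W j t))).
       rewrite Rabs_minus_sym in HN1. lra. }
     assert (Hdrop : A j (t + d) <= A j t - ((eps/4) ^ 2 / (gamma l * Kab Rm rh)) * (t + d - t)).
     { apply S7. lia. lra.
       intros x Hx. pose proof (S4 l t x Hl ltac:(lia) ltac:(lra)). fold Lp in H.
       assert (Lp * (x - t) <= Lp * d) by (apply Rmult_le_compat_l; lra).
       pose proof (Rabs_triang_inv (Jp q gamma l (W j t)) (Jp q gamma l (W j x))).
       rewrite Rabs_minus_sym in H. lra. lra. }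
     assert (Hmono : A j t <= A j T0) by (apply S6; lra).
     specialize (HA j ltac:(lia)). rewrite S_INR.
     replace (t + d - t) with d in Hdrop by ring. fold eta in Hdrop. unfold eta in *. lra. }
 set (Wd := be * rh + (rh + 1 + rh * rh + be * rh)).
 destruct (nat_above (Wd / eta)) as [K HK'].
 destruct (Claim K) as [T0 [HT0 [j0 [Hj0 HA]]]].
 assert (Hj2 : (2 <= j0)%nat) by lia.
 destruct (summ j0 Hj2) as [_ [_ [_ [_ [S5 _]]]]].
 specialize (HA j0 (le_n _)). pose proof (S5 1 ltac:(lra)). pose proof (S5 T0 ltac:(lra)).
 assert (INR K * eta > Wd).
 { apply (Rmult_lt_compat_r eta) in HK'; auto. unfold Rdiv in HK'. rewrite Rmult_assoc, Rinv_l in HK' by lra. lra. }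
 unfold A in HA. unfold Wd in H1. lra. Qed.

Lemma fin_lim L : forall eps, 0 < eps -> exists M, forall t, M < t -> Rabs (sm (fun k => Jp q gamma k (z t)) L) < eps.
Proof. induction L; intros eps He.
 - exists 0. intros. simpl. rewrite Rabs_R0. auto.
 - destruct (IHL (eps/2) ltac:(lra)) as [M1 H1]. destruct (Jl_lim (S L) ltac:(lia) (eps/2) ltac:(lra)) as [M2 H2].
   exists (Rmax M1 M2). intros t Ht. simpl sm. eapply Rle_lt_trans; [apply Rabs_triang|].
   specialize (H1 t ltac:(pose proof (Rmax_l M1 M2); lra)). specialize (H2 t ltac:(pose proof (Rmax_r M1 M2); lra)). lra. Qed.

Lemma zJ_bound t k : 0 <= t -> (1 <= k)%nat ->
  Rabs (Jp q gamma k (z t)) <= gamma k * (rh * z t k + rh * Rm * z t (S k)).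
Proof. intros Ht Hk. unfold Jp. pose proof (hgamma_pos k Hk).
 assert (HRm' : 0 < q k / q (S k) <= Rm) by (split; [apply Rdiv_lt_0_compat; apply hq_pos; lia|apply hRm; auto]).
 pose proof (z_nonneg t 1 Ht (le_n _)). pose proof (z_le t 1 Ht (le_n _)).
 pose proof (z_nonneg t k Ht Hk). pose proof (z_nonneg t (S k) Ht ltac:(lia)). pose proof (z_N_bounds t Ht).
 set (a := z t 1%nat * z t k). set (b := Nz (z t) * (q k / q (S k)) * z t (S k)).
 assert (Ha : 0 <= a <= rh * z t k) by (unfold a; split; [apply Rmult_le_pos|apply Rmult_le_compat_r]; lra).
 assert (Hb : 0 <= b <= rh * Rm * z t (S k)).
 { unfold b. split. apply Rmult_le_pos; [apply Rmult_le_pos|]; lra. apply Rmult_le_compat_r; [lra|]. apply mul_le; lra. }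
 rewrite Rabs_mult, Rabs_right by lra. apply Rmult_le_compat_l; [lra|]. apply Rabs_le. lra. Qed.

Lemma J0_lim : forall eps, 0 < eps -> exists M, forall t, M < t -> Rabs (J q gamma 0 (z t)) < eps.
Proof. intros eps He. assert (HK := Kab_pos). assert (Hrh := rh_pos).
 assert (HG : 0 <= G) by (pose proof (hG 1%nat (le_n _)); pose proof (hgamma_pos 1%nat (le_n _)); simpl in *; lra).
 assert (HRm : 0 < Rm) by (pose proof (hRm 1%nat (le_n _)); assert (0 < q 1%nat / q 2%nat) by (apply Rdiv_lt_0_compat; apply hq_pos; lia); lra).
 set (e' := eps / (4 * Kab Rm rh)). assert (He' : 0 < e') by (unfold e'; apply Rdiv_lt_0_compat; lra).
 pose proof hgamma as Hg. apply is_lim_seq_spec in Hg. destruct (Hg (mkposreal e' He')) as [L0 HL0].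
 set (L := S L0).
 assert (HgL : forall k, (L < k)%nat -> gamma k <= e' * INR k).
 { intros k Hk. destruct k; [lia|]. specialize (HL0 k ltac:(unfold L in Hk; lia)). simpl in HL0.
   rewrite Rminus_0_r in HL0. apply Rabs_lt_between in HL0. assert (0 < INR (S k)) by (apply lt_0_INR; lia).
   destruct HL0 as [_ HL0]. apply (Rmult_lt_compat_r (INR (S k))) in HL0; auto. unfold Rdiv in HL0.
   rewrite Rmult_assoc, Rinv_l in HL0 by lra. lra. }
 destruct (fin_lim L (eps/2) ltac:(lra)) as [M HM]. exists (Rmax M 0). intros t Ht.
 assert (Ht0 : 0 <= t) by (pose proof (Rmax_r M 0); lra). specialize (HM t ltac:(pose proof (Rmax_l M 0); lra)).
 set (f := fun k => Jp q gamma k (z t)).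
 assert (Hex : ex_series (fun k => f (S k))).
 { apply (ex_series_le_R _ (fun k => G * rh * (INR (S k) * Rabs (z t (S k))) + G * rh * Rm * (INR (S (S k)) * Rabs (z t (S (S k)))))).
   - intros k. unfold f. eapply Rle_trans; [apply zJ_bound; auto; lia|].
     rewrite !Rabs_right by (apply Rle_ge, z_nonneg; auto; lia).
     pose proof (hG (S k) ltac:(lia)). pose proof (z_nonneg t (S k) Ht0 ltac:(lia)). pose proof (z_nonneg t (S (S k)) Ht0 ltac:(lia)).
     assert (INR (S k) <= INR (S (S k))) by (apply le_INR; lia).
     assert (0 <= rh * z t (S k) + rh * Rm * z t (S (S k))) by (apply Rplus_le_le_0_compat; [apply Rmult_le_pos|apply Rmult_le_pos; [apply Rmult_le_pos|]]; lra).
     eapply Rle_trans. apply Rmult_le_compat_r; eauto.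
     assert (0 <= G * rh * Rm) by (apply Rmult_le_pos; [apply Rmult_le_pos|]; lra).
     assert (G * rh * Rm * (INR (S k) * z t (S (S k))) <= G * rh * Rm * (INR (S (S k)) * z t (S (S k)))).
     { apply Rmult_le_compat_l; auto. apply Rmult_le_compat_r; auto. }
     lra.
   - apply ex_series_plus_R; apply ex_series_scal_R.
     + apply (proj1 hz_cont); auto.
     + apply (ex_series_incr_1 (fun k => INR (S k) * Rabs (z t (S k)))). apply (proj1 hz_cont); auto. }
 assert (Hsum : is_lim_seq (fun n => sm f n) (Series (fun k => f (S k)))) by (apply Series_sm_limit; auto).
 set (h := fun k => e' * (rh * (INR k * z t k) + rh * Rm * (INR (S k) * z t (S k)))).
 assert (Hh0 : forall k, (1 <= k)%nat -> 0 <= h k).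
 { intros k Hk. unfold h. pose proof (z_nonneg t k Ht0 Hk). pose proof (z_nonneg t (S k) Ht0 ltac:(lia)).
   pose proof (pos_INR k). pose proof (pos_INR (S k)).
   apply Rmult_le_pos; [lra|]. apply Rplus_le_le_0_compat; repeat apply Rmult_le_pos; lra. }
 assert (Hfh : forall k, (L < k)%nat -> Rabs (f k) <= h k).
 { intros k Hk. unfold f, h. eapply Rle_trans; [apply zJ_bound; auto; lia|].
   pose proof (HgL k Hk). pose proof (hgamma_pos k ltac:(lia)).
   pose proof (z_nonneg t k Ht0 ltac:(lia)). pose proof (z_nonneg t (S k) Ht0 ltac:(lia)).
   assert (0 <= rh * z t k + rh * Rm * z t (S k)) by (apply Rplus_le_le_0_compat; [apply Rmult_le_pos|apply Rmult_le_pos; [apply Rmult_le_pos|]]; lra).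
   eapply Rle_trans. apply Rmult_le_compat_r; eauto.
   assert (INR k <= INR (S k)) by (apply le_INR; lia).
   assert (0 <= rh * Rm) by (apply Rmult_le_pos; lra).
   assert (rh * Rm * (INR k * z t (S k)) <= rh * Rm * (INR (S k) * z t (S k))) by (apply Rmult_le_compat_l; auto; apply Rmult_le_compat_r; auto).
   assert (Heq : e' * INR k * (rh * z t k + rh * Rm * z t (S k)) = e' * (rh * (INR k * z t k) + rh * Rm * (INR k * z t (S k)))) by ring.
   rewrite Heq. apply Rmult_le_compat_l; lra. }
 assert (Hhs : forall n, sm h n <= eps / 4).
 { intros n. unfold h. rewrite sm_scal, sm_plus, !sm_scal.
   assert (sm (fun k => INR k * z t k) n <= rh) by (apply z_mass; auto).
   assert (sm (fun k => INR (S k) * z t (S k)) n <= rh).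
   { eapply Rle_trans; [|apply (z_mass t (S n) Ht0)]. rewrite (sm_shift (fun k => INR k * z t k)).
     assert (0 <= INR 1 * z t 1%nat) by (apply Rmult_le_pos; [apply pos_INR|apply z_nonneg; auto]). lra. }
   assert (rh * sm (fun k => INR k * z t k) n + rh * Rm * sm (fun k => INR (S k) * z t (S k)) n <= Kab Rm rh).
   { unfold Kab. assert (0 <= rh * Rm) by (apply Rmult_le_pos; lra).
     apply Rplus_le_compat; apply Rmult_le_compat_l; lra. }
   replace (eps / 4) with (e' * Kab Rm rh) by (unfold e'; field; lra). apply Rmult_le_compat_l; lra. }
 assert (Htail : forall n, (L <= n)%nat -> Rabs (sm f n - sm f L) <= eps / 4).
 { intros n Hn. replace n with (L + (n - L))%nat by lia. rewrite sm_split.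
   replace (sm f L + sm (fun k => f (L + k)%nat) (n - L) - sm f L) with (sm (fun k => f (L + k)%nat) (n - L)) by ring.
   eapply Rle_trans; [apply sm_abs|]. eapply Rle_trans. apply (sm_le _ (fun k => h (L + k)%nat)). intros; apply Hfh; lia.
   eapply Rle_trans; [|apply (Hhs (L + (n - L))%nat)]. rewrite sm_split.
   assert (0 <= sm h L) by (apply sm_nonneg; intros; apply Hh0; lia). lra. }
 assert (HS : Rabs (Series (fun k => f (S k)) - sm f L) <= eps / 4).
 { apply Rabs_le. split.
   - cut (sm f L - eps / 4 <= Series (fun k => f (S k))). lra. apply (lim_ge _ _ _ Hsum). exists L. intros n Hn.
     specialize (Htail n Hn). apply Rabs_le_between in Htail. lra.
   - cut (Series (fun k => f (S k)) <= sm f L + eps / 4). lra. apply (lim_le _ _ _ Hsum). exists L. intros n Hn.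
     specialize (Htail n Hn). apply Rabs_le_between in Htail. lra. }
 simpl J. rewrite Rabs_Ropp. fold f in HM.
 replace (Series (fun k => Jp q gamma (S k) (z t))) with (Series (fun k => f (S k))) by reflexivity.
 pose proof (Rabs_triang_inv (Series (fun k => f (S k))) (sm f L)). lra. Qed.

End Main2.



Lemma final : forall l, is_lim (fun t => J q gamma l (z t)) p_infty 0.
Proof. destruct consts as [G [Rm [be [hG [hRm hlq]]]]]. intros l. apply is_lim_spec. intros eps.
 destruct l.
 - destruct (J0_lim G Rm be hG hRm hlq eps (cond_pos eps)) as [M HM]. exists M. intros t Ht. rewrite Rminus_0_r. auto.
 - destruct (Jl_lim G Rm be hG hRm hlq (S l) ltac:(lia) eps (cond_pos eps)) as [M HM]. exists M. intros t Ht. rewrite Rminus_0_r. apply HM; auto.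
Qed.

End Main.


Theorem lemma15
  (q gamma y : nat -> R) (Rlim : R)
  (hq_pos : forall l, (1 <= l)%nat -> 0 < q l)
  (hq1 : q 1%nat = 1)
  (hR : is_lim_seq (fun l => q (S l) / q (S (S l))) Rlim)
  (hR_pos : 0 < Rlim)
  (hgamma_pos : forall l, (1 <= l)%nat -> 0 < gamma l)
  (hgamma : is_lim_seq (fun l => gamma (S l) / INR (S l)) 0)
  (hy_nonneg : forall l, (1 <= l)%nat -> 0 <= y l)
  (hyX : inX y)
  (hy1 : 0 < y 1%nat)
  (hrho : 0 < rho y)
  (zm : nat -> R -> nat -> R)
  (hzm : forall m, (2 <= m)%nat -> trunc_sol q gamma y m (zm m))
  (z : R -> nat -> R)
  (hz_cont : cont_into_X z)
  (phi : nat -> nat)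
  (hphi : forall j, (phi j < phi (S j))%nat)
  (hconv : forall l, (1 <= l)%nat -> forall T, 0 <= T -> forall eps, 0 < eps ->
     exists N, forall j, (N <= j)%nat -> forall t, 0 <= t <= T ->
       Rabs (zm (phi j) t l - z t l) < eps) :
  forall l, is_lim (fun t => J q gamma l (z t)) p_infty 0.
Proof.
  eapply final; eassumption.
Qed.
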